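(* Let $G$ be a GP 2 host graph such that every node is marked grey, exactly one node is a root, every edge is unmarked and labelled with an integer, and there are no loops; let $n$ and $m$ be its numbers of nodes and edges. When the GP 2 program bellman-ford is executed on $G$ (via the GP 2-to-C compiler, under the cost model below), it terminates in time $\mathrm{O}(nm)$.
   Context: GP 2 semantics. Host graphs are finite directed graphs whose nodes and edges carry labels (lists of integers and strings; ''x:s'' denotes the list x followed by the atom s) and marks (nodes: unmarked, red, green, blue, grey; edges: unmarked, red, green, blue, dashed); some nodes are roots. A rule (with list variables x,y and integer variables i,s,t,w) is applied by finding an injective label- and mark-compatible match of its left-hand side (mark ''any'' matches every mark; roots match roots), satisfying the dangling condition and the rule's condition, then changing matched items as prescribed by the right-hand side. Commands: a rule set call applies one applicable rule, failing if none applies; $P;Q$ sequencing; $P!$ iterates $P$ until it fails; ''try $C$ then $P$ else $Q$'' runs $C$ and continues with $P$ on its result if it succeeded, else $Q$ on the original graph; ''if $C$ then $P$ else $Q$'' runs $C$ on a copy then $P$ or $Q$ on the original; fail causes failure. Cost model (updated GP 2-to-C compiler). Host nodes are stored in separate linked lists per node mark, roots in a list, and each node has a two-dimensional array of linked lists of incident edges indexed by edge mark and orientation (incoming, outgoing, loop). Each elementary operation takes constant time: fetch first/next node with a given mark; fetch first/next root; given a node, fetch first/next incoming, outgoing or loop edge with a given mark; read degrees, mark, root status, source, target; set/clear/test a ''matched'' flag. Matching is a search using these operations; once a match is found, completing a rule application takes constant time for the rules of this program. Running time is the total cost. The program bellman-ford: Main = set_counter; count!; (decrement; Relax!; Clean!)!;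 Final Relax = root1; try no_deg else ((unmarked_edge; try {unvisited, reduce}; finish)!; unroot1) Clean = root2; unmark_edge!; unroot2 Final = (root1; (unmarked_edge; if reduce then set_flag; finish)!; unroot1)!; if flag then fail; delete_counter; no_deg_inv! Rules (edges directed 1→2; labels unchanged unless stated): - set_counter(x): grey root labelled x becomes blue non-root labelled x:0; a new green node labelled 0 is created with a new dashed edge from it to node 1. - count(x; i): grey node 1 labelled x and green node 2 labelled i; node 1 becomes blue labelled x:''f'', node 2 labelled i+1. - decrement(i): green node labelled i with i>0; label becomes i−1. - root1: blue node becomes blue root. - no_deg(x): a blue root labelled x with no incident edges is replaced by an unmarked non-root node labelled x. - unmarked_edge: blue root 1, node 2 any mark, unmarked edge 1→2; edge becomes red. - unvisited(x,y; s,w): blue root 1 labelled x:s, node 2 labelled y:''f'', red edge labelled w; node 2 labelled y:(s+w). - reduce(x,y; s,t,w): blue root 1 labelled x:s, node 2 labelled y:t, red edge labelled w, condition s+w<t; node 2 labelled y:(s+w). - finish: blue root 1, red edge 1→2; edge becomes blue. - unroot1: blue root becomes grey non-root. - root2: grey node becomes blue root. - unmark_edge: blue root 1, blue edge 1→2; edge becomes unmarked. - unroot2: blue root becomes blue non-root. - set_flag: a green node's label becomes −1. - flag: green node labelled −1; no change. - delete_counter: a node 1 together with a green node and a dashed edge from the green node to node 1; the green node and dashed edge are deleted and node 1 becomes a root. - no_deg_inv: an unmarked node becomes grey. *)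

(* Defs.v *)
From Stdlib Require Import List ZArith String Bool Permutation Arith.
Import ListNotations.

Inductive atom := AInt (z : Z) | AStr (s : string).
Definition label := list atom.

Inductive nmark := NUn | NRed | NGreen | NBlue | NGrey.
Inductive emark := EUn | ERed | EGreen | EBlue | EDashed.

Definition nmark_beq (a b : nmark) : bool :=
  match a, b with
  | NUn, NUn | NRed, NRed | NGreen, NGreen | NBlue, NBlue | NGrey, NGrey => true
  | _, _ => false end.
Definition emark_beq (a b : emark) : bool :=
  match a, b with
  | EUn, EUn | ERed, ERed | EGreen, EGreen | EBlue, EBlue | EDashed, EDashed => true
  | _, _ => false end.

Record node := mkNode { nid : nat; nlab : label; nmk : nmark; nroot : bool }.
Record edge := mkEdge { eid : nat; esrc : nat; etgt : nat; elab : label; emk : emark }.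
Record graph := mkGraph { gnodes : list node; gedges : list edge }.

Definition num_nodes (G : graph) : nat := List.length (gnodes G).
Definition num_edges (G : graph) : nat := List.length (gedges G).

Definition find_node (G : graph) (v : nat) : option node :=
  find (fun x => Nat.eqb (nid x) v) (gnodes G).
Definition find_edge (G : graph) (e : nat) : option edge :=
  find (fun x => Nat.eqb (eid x) e) (gedges G).
Definition upd_node (G : graph) (v : nat) (f : node -> node) : graph :=
  mkGraph (map (fun x => if Nat.eqb (nid x) v then f x else x) (gnodes G)) (gedges G).
Definition upd_edge (G : graph) (e : nat) (f : edge -> edge) : graph :=
  mkGraph (gnodes G) (map (fun x => if Nat.eqb (eid x) e then f x else x) (gedges G)).
Definition del_node (G : graph) (v : nat) : graph :=
  mkGraph (filter (fun x => negb (Nat.eqb (nid x) v)) (gnodes G)) (gedges G).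
Definition del_edge (G : graph) (e : nat) : graph :=
  mkGraph (gnodes G) (filter (fun x => negb (Nat.eqb (eid x) e)) (gedges G)).
Definition fresh_nid (G : graph) : nat := S (fold_right Nat.max 0 (map nid (gnodes G))).
Definition fresh_eid (G : graph) : nat := S (fold_right Nat.max 0 (map eid (gedges G))).
Definition add_node (G : graph) (x : node) : graph := mkGraph (gnodes G ++ [x]) (gedges G).
Definition add_edge (G : graph) (e : edge) : graph := mkGraph (gnodes G) (gedges G ++ [e]).

Definition degree (G : graph) (v : nat) : nat :=
  List.length (filter (fun e => Nat.eqb (esrc e) v || Nat.eqb (etgt e) v) (gedges G)).

Definition set_mark (m : nmark) (x : node) : node := mkNode (nid x) (nlab x) m (nroot x).
Definition set_root (b : bool) (x : node) : node := mkNode (nid x) (nlab x) (nmk x) b.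
Definition set_lab (l : label) (x : node) : node := mkNode (nid x) l (nmk x) (nroot x).
Definition set_emark (m : emark) (e : edge) : edge := mkEdge (eid e) (esrc e) (etgt e) (elab e) m.

Definition last_int (l : label) : option (label * Z) :=
  match rev l with AInt s :: r => Some (rev r, s) | _ => None end.
Definition last_str (l : label) (s : string) : option label :=
  match rev l with AStr s' :: r => if String.eqb s s' then Some (rev r) else None | _ => None end.
Definition single_int (l : label) : option Z :=
  match l with [AInt i] => Some i | _ => None end.

Inductive orient := OIn | OOut | OLoop.
Inductive lkey :=
| KNodes (m : nmark)
| KRoots
| KEdges (v : nat) (m : emark) (o : orient).

Definition orient_ok (o : orient) (v : nat) (e : edge) : bool :=
  match o with
  | OIn => Nat.eqb (etgt e) v && negb (Nat.eqb (esrc e) v)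
  | OOut => Nat.eqb (esrc e) v && negb (Nat.eqb (etgt e) v)
  | OLoop => Nat.eqb (esrc e) v && Nat.eqb (etgt e) v
  end.

Definition canon (G : graph) (k : lkey) : list nat :=
  match k with
  | KNodes m => map nid (filter (fun x => nmark_beq (nmk x) m) (gnodes G))
  | KRoots => map nid (filter nroot (gnodes G))
  | KEdges v m o => map eid (filter (fun e => emark_beq (emk e) m && orient_ok o v e) (gedges G))
  end.

(* The order of the runtime linked lists is implementation-dependent; it is
   supplied by an arbitrary oracle (depending on the current time, the graph
   and the list), which must return a permutation of the list contents. *)
Definition oracle := nat -> graph -> lkey -> list nat -> list nat.
Definition valid_oracle (o : oracle) : Prop :=
  forall t G k l, Permutation (o t G k l) l.

(* search result: (cost, resulting graph if a match was found) *)
Definition res := (nat * option graph)%type.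

(* fetch first/next element, 1 time unit per fetch (incl. the final null) *)
Fixpoint first_match (f : nat -> res) (l : list nat) : res :=
  match l with
  | [] => (1, None)
  | x :: l' =>
      let '(c, r) := f x in
      match r with
      | Some _ => (S c, r)
      | None => let '(c', r') := first_match f l' in (S (c + c'), r')
      end
  end.

Definition iter (o : oracle) (t : nat) (G : graph) (k : lkey) (f : nat -> res) : res :=
  first_match f (o t G k (canon G k)).

Definition guard (b : bool) (k : res) : res :=
  if b then let '(c, r) := k in (S c, r) else (1, None).
Definition gopt {A} (x : option A) (k : A -> res) : res :=
  match x with Some a => let '(c, r) := k a in (S c, r) | None => (1, None) end.
Definition done (G : graph) : res := (1, Some G).

Definition rule := oracle -> nat -> graph -> res.

Definition blue_root (o : oracle) (t : nat) (G : graph) (k : nat -> node -> res) : res :=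
  iter o t G KRoots (fun v => gopt (find_node G v) (fun x =>
    guard (nmark_beq (nmk x) NBlue) (k v x))).

Definition r_set_counter : rule := fun o t G =>
  iter o t G KRoots (fun v => gopt (find_node G v) (fun x =>
    guard (nmark_beq (nmk x) NGrey)
      (let G1 := upd_node G v (fun y => mkNode (nid y) (nlab y ++ [AInt 0%Z]) NBlue false) in
       let g := fresh_nid G1 in
       let G2 := add_node G1 (mkNode g [AInt 0%Z] NGreen false) in
       done (add_edge G2 (mkEdge (fresh_eid G2) g v [] EDashed))))).

Definition r_count : rule := fun o t G =>
  iter o t G (KNodes NGrey) (fun v1 => gopt (find_node G v1) (fun _ =>
    iter o t G (KNodes NGreen) (fun v2 =>
      guard (negb (Nat.eqb v1 v2)) (gopt (find_node G v2) (fun x2 =>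
        gopt (single_int (nlab x2)) (fun i =>
          done (upd_node
                  (upd_node G v1 (fun y => mkNode (nid y) (nlab y ++ [AStr "f"%string]) NBlue (nroot y)))
                  v2 (set_lab [AInt (i + 1)%Z])))))))).

Definition r_decrement : rule := fun o t G =>
  iter o t G (KNodes NGreen) (fun v => gopt (find_node G v) (fun x =>
    gopt (single_int (nlab x)) (fun i =>
      guard (Z.ltb 0 i) (done (upd_node G v (set_lab [AInt (i - 1)%Z])))))).

Definition r_root1 : rule := fun o t G =>
  iter o t G (KNodes NBlue) (fun v => done (upd_node G v (set_root true))).

Definition r_no_deg : rule := fun o t G =>
  blue_root o t G (fun v _ =>
    guard (Nat.eqb (degree G v) 0)
      (done (upd_node G v (fun y => set_root false (set_mark NUn y))))).

Definition r_unmarked_edge : rule := fun o t G =>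
  blue_root o t G (fun v _ =>
    iter o t G (KEdges v EUn OOut) (fun e => gopt (find_edge G e) (fun ed =>
      guard (negb (Nat.eqb (etgt ed) v)) (done (upd_edge G e (set_emark ERed)))))).

Definition r_unvisited : rule := fun o t G =>
  blue_root o t G (fun v x =>
    gopt (last_int (nlab x)) (fun '(_, s) =>
    iter o t G (KEdges v ERed OOut) (fun e => gopt (find_edge G e) (fun ed =>
      gopt (single_int (elab ed)) (fun w =>
      guard (negb (Nat.eqb (etgt ed) v)) (gopt (find_node G (etgt ed)) (fun x2 =>
        gopt (last_str (nlab x2) "f"%string) (fun y =>
          done (upd_node G (etgt ed) (set_lab (y ++ [AInt (s + w)%Z]))))))))))).

Definition r_reduce : rule := fun o t G =>
  blue_root o t G (fun v x =>
    gopt (last_int (nlab x)) (fun '(_, s) =>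
    iter o t G (KEdges v ERed OOut) (fun e => gopt (find_edge G e) (fun ed =>
      gopt (single_int (elab ed)) (fun w =>
      guard (negb (Nat.eqb (etgt ed) v)) (gopt (find_node G (etgt ed)) (fun x2 =>
        gopt (last_int (nlab x2)) (fun '(y, tv) =>
          guard (Z.ltb (s + w) tv)
            (done (upd_node G (etgt ed) (set_lab (y ++ [AInt (s + w)%Z])))))))))))).

Definition r_finish : rule := fun o t G =>
  blue_root o t G (fun v _ =>
    iter o t G (KEdges v ERed OOut) (fun e => gopt (find_edge G e) (fun ed =>
      guard (negb (Nat.eqb (etgt ed) v)) (done (upd_edge G e (set_emark EBlue)))))).

Definition r_unroot1 : rule := fun o t G =>
  blue_root o t G (fun v _ => done (upd_node G v (fun y => set_root false (set_mark NGrey y)))).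

Definition r_root2 : rule := fun o t G =>
  iter o t G (KNodes NGrey) (fun v =>
    done (upd_node G v (fun y => set_root true (set_mark NBlue y)))).

Definition r_unmark_edge : rule := fun o t G =>
  blue_root o t G (fun v _ =>
    iter o t G (KEdges v EBlue OOut) (fun e => gopt (find_edge G e) (fun ed =>
      guard (negb (Nat.eqb (etgt ed) v)) (done (upd_edge G e (set_emark EUn)))))).

Definition r_unroot2 : rule := fun o t G =>
  blue_root o t G (fun v _ => done (upd_node G v (set_root false))).

Definition r_set_flag : rule := fun o t G =>
  iter o t G (KNodes NGreen) (fun v => gopt (find_node G v) (fun x =>
    gopt (single_int (nlab x)) (fun _ => done (upd_node G v (set_lab [AInt (-1)%Z]))))).

Definition r_flag : rule := fun o t G =>
  iter o t G (KNodes NGreen) (fun v => gopt (find_node G v) (fun x =>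
    gopt (single_int (nlab x)) (fun i => guard (Z.eqb i (-1)) (done G)))).

(* node 2 = green node (deleted), node 1 = target of its dashed edge.
   Dangling condition for the deleted green node: its degree must be 1. *)
Definition r_delete_counter : rule := fun o t G =>
  iter o t G (KNodes NGreen) (fun g =>
    iter o t G (KEdges g EDashed OOut) (fun e => gopt (find_edge G e) (fun ed =>
      guard (negb (Nat.eqb (etgt ed) g)) (
      guard (Nat.eqb (degree G g) 1)
        (done (upd_node (del_node (del_edge G e) g) (etgt ed) (set_root true))))))).

Definition r_no_deg_inv : rule := fun o t G =>
  iter o t G (KNodes NUn) (fun v => done (upd_node G v (set_mark NGrey))).

Inductive cmd :=
| Call (rs : list rule)         (* rule set call, rules tried in order *)
| Seq (p q : cmd)
| Loop (p : cmd)
| TryTE (c p q : cmd)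
| IfTE (c p q : cmd)
| Skip
| FailC.

Fixpoint apply_rules (o : oracle) (t : nat) (rs : list rule) (G : graph)
  : option graph * nat :=
  match rs with
  | [] => (None, t)
  | r :: rs' =>
      let '(c, rr) := r o t G in
      match rr with
      | Some G' => (Some G', t + c)
      | None => apply_rules o (t + c) rs' G
      end
  end.

(* exec o fuel P t G = Some (outcome, t') : P started at time t on G
   terminates (within recursion depth fuel) at time t', with outcome
   Some H (result graph) or None (failure).  None = fuel exhausted.
   Restoring a graph after a failed/discarded computation (try-else,
   if, failed loop body) is charged as much time as that computation. *)
Fixpoint exec (o : oracle) (fuel : nat) (P : cmd) (t : nat) (G : graph)
  : option (option graph * nat) :=
  match fuel with
  | 0 => None
  | S f =>
    match P with
    | Skip => Some (Some G, t)
    | FailC => Some (None, S t)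
    | Call rs => Some (apply_rules o t rs G)
    | Seq p q =>
        match exec o f p t G with
        | None => None
        | Some (None, t1) => Some (None, t1)
        | Some (Some G1, t1) => exec o f q t1 G1
        end
    | Loop p =>
        match exec o f p t G with
        | None => None
        | Some (None, t1) => Some (Some G, t1 + (t1 - t))
        | Some (Some G1, t1) => exec o f (Loop p) t1 G1
        end
    | TryTE c p q =>
        match exec o f c t G with
        | None => None
        | Some (Some G1, t1) => exec o f p t1 G1
        | Some (None, t1) => exec o f q (t1 + (t1 - t)) G
        end
    | IfTE c p q =>
        match exec o f c t G with
        | None => None
        | Some (Some _, t1) => exec o f p (t1 + (t1 - t)) G
        | Some (None, t1) => exec o f q (t1 + (t1 - t)) G
        end
    end
  end.

Definition R (r : rule) : cmd := Call [r].

Definition Relax : cmd :=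
  Seq (R r_root1)
      (TryTE (R r_no_deg) Skip
         (Seq (Loop (Seq (R r_unmarked_edge)
                         (Seq (TryTE (Call [r_unvisited; r_reduce]) Skip Skip)
                              (R r_finish))))
              (R r_unroot1))).

Definition Clean : cmd :=
  Seq (R r_root2) (Seq (Loop (R r_unmark_edge)) (R r_unroot2)).

Definition Final : cmd :=
  Seq (Loop (Seq (R r_root1)
                 (Seq (Loop (Seq (R r_unmarked_edge)
                                 (Seq (IfTE (R r_reduce) (R r_set_flag) Skip)
                                      (R r_finish))))
                      (R r_unroot1))))
      (Seq (IfTE (R r_flag) FailC Skip)
           (Seq (R r_delete_counter) (Loop (R r_no_deg_inv)))).

Definition bellman_ford : cmd :=
  Seq (R r_set_counter)
      (Seq (Loop (R r_count))
           (Seq (Loop (Seq (R r_decrement) (Seq (Loop Relax) (Loop Clean))))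
                Final)).

Definition input_ok (G : graph) : Prop :=
  NoDup (map nid (gnodes G)) /\
  NoDup (map eid (gedges G)) /\
  (forall e, In e (gedges G) ->
     In (esrc e) (map nid (gnodes G)) /\ In (etgt e) (map nid (gnodes G))) /\
  (forall x, In x (gnodes G) -> nmk x = NGrey) /\
  List.length (filter nroot (gnodes G)) = 1 /\
  (forall e, In e (gedges G) ->
     emk e = EUn /\ (exists z : Z, elab e = [AInt z]) /\ esrc e <> etgt e).

(* Main.v *)
Require Import Defs.
From Stdlib Require Import List ZArith String Bool Permutation Arith Lia.
Import ListNotations.
Require Import Defs.


Lemma exec_mono o f P t G r : exec o f P t G = Some r ->
  forall f', f <= f' -> exec o f' P t G = Some r.
Proof.
  revert P t G r. induction f as [|f IH]; intros P t G r H f' Hf; [discriminate|].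
  destruct f' as [|f']; [lia|]. assert (Hf2 : f <= f') by lia.
  destruct P; simpl in *; auto.
  - destruct (exec o f P1 t G) as [[[G1|] t1]|] eqn:E; try discriminate;
      rewrite (IH _ _ _ _ E _ Hf2); auto.
  - destruct (exec o f P t G) as [[[G1|] t1]|] eqn:E; try discriminate;
      rewrite (IH _ _ _ _ E _ Hf2); auto.
  - destruct (exec o f P1 t G) as [[[G1|] t1]|] eqn:E; try discriminate;
      rewrite (IH _ _ _ _ E _ Hf2); auto.
  - destruct (exec o f P1 t G) as [[[G1|] t1]|] eqn:E; try discriminate;
      rewrite (IH _ _ _ _ E _ Hf2); auto.
Qed.

Lemma apply_rules_time o rs t G : t <= snd (apply_rules o t rs G).
Proof. revert t. induction rs as [|r rs IH]; intros t; simpl; auto.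
  destruct (r o t G) as [c [G'|]]; simpl; [lia|]. specialize (IH (t + c)). lia. Qed.

Lemma exec_time o f P t G r t' : exec o f P t G = Some (r, t') -> t <= t'.
Proof.
  revert P t G r t'. induction f as [|f IH]; intros P t G r t' H; [discriminate|].
  destruct P; simpl in H.
  - inversion H; subst. pose proof (apply_rules_time o rs t G).
    destruct (apply_rules o t rs G); simpl in *; congruence.
  - destruct (exec o f P1 t G) as [[[G1|] t1]|] eqn:E; try discriminate.
    + apply IH in E. apply IH in H. lia.
    + inversion H; subst. eauto.
  - destruct (exec o f P t G) as [[[G1|] t1]|] eqn:E; try discriminate.
    + apply IH in E. apply IH in H. lia.
    + inversion H; subst. apply IH in E. lia.
  - destruct (exec o f P1 t G) as [[[G1|] t1]|] eqn:E; try discriminate.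
    + apply IH in E. apply IH in H. lia.
    + apply IH in E. apply IH in H. lia.
  - destruct (exec o f P1 t G) as [[[G1|] t1]|] eqn:E; try discriminate.
    + apply IH in E. apply IH in H. lia.
    + apply IH in E. apply IH in H. lia.
  - inversion H; lia.
  - inversion H; lia.
Qed.

Definition Runs o P t G (Q : option graph -> nat -> Prop) :=
  exists f r t', exec o f P t G = Some (r, t') /\ Q r t'.

Lemma runs_mono o P t G (Q Q' : option graph -> nat -> Prop) :
  Runs o P t G Q -> (forall r t', Q r t' -> Q' r t') -> Runs o P t G Q'.
Proof. intros [f [r [t' [E HQ]]]] H. exists f, r, t'. auto. Qed.

Lemma runs_skip o t G Q : Q (Some G) t -> Runs o Skip t G Q.
Proof. intros. exists 1, (Some G), t. auto. Qed.

Lemma runs_fail o t G Q : Q None (S t) -> Runs o FailC t G Q.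
Proof. intros. exists 1, None, (S t). auto. Qed.

Lemma runs_call o rs t G Q : Q (fst (apply_rules o t rs G)) (snd (apply_rules o t rs G)) ->
  Runs o (Call rs) t G Q.
Proof. intros. exists 1, (fst (apply_rules o t rs G)), (snd (apply_rules o t rs G)).
  simpl. destruct (apply_rules o t rs G); auto. Qed.

Lemma runs_R o r t G Q :
  Q (snd (r o t G)) (t + fst (r o t G)) -> Runs o (R r) t G Q.
Proof. intros H. apply runs_call. simpl. destruct (r o t G) as [c [G'|]]; simpl in *; auto.
Qed.

Lemma runs_seq o p q t G Q1 Q :
  Runs o p t G Q1 ->
  (forall G1 t1, Q1 (Some G1) t1 -> Runs o q t1 G1 Q) ->
  (forall t1, Q1 None t1 -> Q None t1) ->
  Runs o (Seq p q) t G Q.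
Proof.
  intros [f1 [r1 [t1 [E1 H1]]]] Hs Hn. destruct r1 as [G1|].
  - destruct (Hs _ _ H1) as [f2 [r2 [t2 [E2 H2]]]].
    exists (S (Nat.max f1 f2)), r2, t2. split; auto. simpl.
    rewrite (exec_mono _ _ _ _ _ _ E1 (Nat.max f1 f2)) by lia.
    apply (exec_mono _ _ _ _ _ _ E2). lia.
  - exists (S f1), None, t1. simpl. rewrite E1. auto.
Qed.

Lemma runs_try o c p q t G Q1 Q :
  Runs o c t G Q1 ->
  (forall G1 t1, Q1 (Some G1) t1 -> Runs o p t1 G1 Q) ->
  (forall t1, Q1 None t1 -> Runs o q (t1 + (t1 - t)) G Q) ->
  Runs o (TryTE c p q) t G Q.
Proof.
  intros [f1 [r1 [t1 [E1 H1]]]] Hs Hn. destruct r1 as [G1|].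
  - destruct (Hs _ _ H1) as [f2 [r2 [t2 [E2 H2]]]].
    exists (S (Nat.max f1 f2)), r2, t2. split; auto. simpl.
    rewrite (exec_mono _ _ _ _ _ _ E1 (Nat.max f1 f2)) by lia.
    apply (exec_mono _ _ _ _ _ _ E2). lia.
  - destruct (Hn _ H1) as [f2 [r2 [t2 [E2 H2]]]].
    exists (S (Nat.max f1 f2)), r2, t2. split; auto. simpl.
    rewrite (exec_mono _ _ _ _ _ _ E1 (Nat.max f1 f2)) by lia.
    apply (exec_mono _ _ _ _ _ _ E2). lia.
Qed.

Lemma runs_if o c p q t G Q1 Q :
  Runs o c t G Q1 ->
  (forall G1 t1, Q1 (Some G1) t1 -> Runs o p (t1 + (t1 - t)) G Q) ->
  (forall t1, Q1 None t1 -> Runs o q (t1 + (t1 - t)) G Q) ->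
  Runs o (IfTE c p q) t G Q.
Proof.
  intros [f1 [r1 [t1 [E1 H1]]]] Hs Hn. destruct r1 as [G1|].
  - destruct (Hs _ _ H1) as [f2 [r2 [t2 [E2 H2]]]].
    exists (S (Nat.max f1 f2)), r2, t2. split; auto. simpl.
    rewrite (exec_mono _ _ _ _ _ _ E1 (Nat.max f1 f2)) by lia.
    apply (exec_mono _ _ _ _ _ _ E2). lia.
  - destruct (Hn _ H1) as [f2 [r2 [t2 [E2 H2]]]].
    exists (S (Nat.max f1 f2)), r2, t2. split; auto. simpl.
    rewrite (exec_mono _ _ _ _ _ _ E1 (Nat.max f1 f2)) by lia.
    apply (exec_mono _ _ _ _ _ _ E2). lia.
Qed.

Lemma runs_loop o p (Inv : graph -> Prop) (Phi : graph -> nat) (Post : graph -> Prop) K :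
  (forall G t, Inv G -> Runs o p t G (fun r t1 => match r with
      | Some G1 => Inv G1 /\ t1 + Phi G1 + 1 <= t + Phi G
      | None => t1 <= t + K /\ Post G end)) ->
  forall G t, Inv G -> Runs o (Loop p) t G (fun r t' => exists G', r = Some G' /\
      Inv G' /\ Post G' /\ t' + Phi G' <= t + Phi G + 2 * K).
Proof.
  intros Hb. intros G. remember (Phi G) as n eqn:En.
  revert G En. induction n as [n IH] using lt_wf_ind. intros G En t HI.
  destruct (Hb G t HI) as [f1 [r1 [t1 [E1 H1]]]]. destruct r1 as [G1|].
  - destruct H1 as [HI1 Hc].
    assert (Hlt : Phi G1 < n) by (pose proof (exec_time o _ _ _ _ _ _ E1); lia).
    destruct (IH (Phi G1) Hlt G1 eq_refl t1 HI1) as [f2 [r2 [t2 [E2 H2]]]].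
    exists (S (Nat.max f1 f2)), r2, t2. split.
    + simpl. rewrite (exec_mono _ _ _ _ _ _ E1 (Nat.max f1 f2)) by lia.
      apply (exec_mono _ _ _ _ _ _ E2). lia.
    + destruct H2 as [G' [-> [A [B C]]]]. exists G'. repeat split; auto. lia.
  - destruct H1 as [Hc HP]. exists (S f1), (Some G), (t1 + (t1 - t)). split.
    + simpl. rewrite E1. auto.
    + exists G. repeat split; auto. lia.
Qed.

Lemma runs_loop_step o p t G Q1 Q : Runs o p t G Q1 ->
  (forall G1 t1, Q1 (Some G1) t1 -> Runs o (Loop p) t1 G1 Q) ->
  (forall t1, Q1 None t1 -> Q (Some G) (t1 + (t1 - t))) -> Runs o (Loop p) t G Q.
Proof.
  intros [f1 [r1 [t1 [E1 H1]]]] Hs Hn. destruct r1 as [G1|].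
  - destruct (Hs _ _ H1) as [f2 [r2 [t2 [E2 H2]]]].
    exists (S (Nat.max f1 f2)), r2, t2. split; auto. simpl.
    rewrite (exec_mono _ _ _ _ _ _ E1 (Nat.max f1 f2)) by lia.
    apply (exec_mono _ _ _ _ _ _ E2). lia.
  - exists (S f1), (Some G), (t1 + (t1 - t)). simpl. rewrite E1. auto.
Qed.


Lemma fm_bound f l K : (forall x, In x l -> fst (f x) <= K) ->
  fst (first_match f l) <= 1 + List.length l * S K.
Proof.
  induction l as [|x l IH]; intros H; simpl; [lia|].
  pose proof (H x (or_introl eq_refl)) as Hx.
  destruct (f x) as [c r] eqn:E. simpl in Hx. destruct r as [G|]; simpl; [lia|].
  destruct (first_match f l) as [c' r'] eqn:E'. simpl in *.
  assert (c' <= 1 + List.length l * S K) by (apply IH; auto). lia.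
Qed.

Lemma fm_some f l H : snd (first_match f l) = Some H -> exists x, In x l /\ snd (f x) = Some H.
Proof.
  induction l as [|x l IH]; simpl; intros E; [discriminate|].
  destruct (f x) as [c r] eqn:Ef. destruct r as [G|].
  - simpl in E. exists x. rewrite Ef. simpl. auto.
  - destruct (first_match f l) as [c' r'] eqn:E'. simpl in E.
    destruct (IH E) as [y [Hy Hy']]. exists y. auto.
Qed.

Lemma fm_cons f x l G : snd (f x) = Some G -> first_match f (x :: l) = (S (fst (f x)), Some G).
Proof. simpl. destruct (f x) as [c [G'|]]; simpl; intros E; inversion E; auto. Qed.

Lemma fm_single f x : fst (first_match f [x]) <= S (S (fst (f x))) /\ snd (first_match f [x]) = snd (f x).
Proof. simpl. destruct (f x) as [c [G'|]]; simpl; split; auto; lia. Qed.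

Lemma iter_bound o t G k f K : valid_oracle o ->
  (forall x, In x (canon G k) -> fst (f x) <= K) ->
  fst (iter o t G k f) <= 1 + List.length (canon G k) * S K.
Proof.
  intros Ho H. unfold iter. pose proof (Ho t G k (canon G k)) as P.
  rewrite <- (Permutation_length P). apply fm_bound.
  intros x Hx. apply H. eapply Permutation_in; eauto.
Qed.

Lemma iter_some o t G k f H : valid_oracle o ->
  snd (iter o t G k f) = Some H -> exists x, In x (canon G k) /\ snd (f x) = Some H.
Proof.
  intros Ho E. unfold iter in E. apply fm_some in E. destruct E as [x [Hx E]].
  exists x. split; auto. eapply Permutation_in; eauto.
Qed.

Lemma iter_nil o t G k f : valid_oracle o -> canon G k = [] -> iter o t G k f = (1, None).
Proof.
  intros Ho E. unfold iter. pose proof (Ho t G k (canon G k)) as P. rewrite E in *.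
  apply Permutation_sym, Permutation_nil in P. rewrite P. reflexivity.
Qed.

Lemma iter_single o t G k f x : valid_oracle o -> canon G k = [x] ->
  fst (iter o t G k f) <= S (S (fst (f x))) /\ snd (iter o t G k f) = snd (f x).
Proof.
  intros Ho E. unfold iter. pose proof (Ho t G k (canon G k)) as P. rewrite E in *.
  apply Permutation_sym, Permutation_length_1_inv in P. rewrite P. apply fm_single.
Qed.

Lemma iter_all o t G k f K : valid_oracle o -> canon G k <> [] ->
  (forall x, In x (canon G k) -> fst (f x) <= K /\ snd (f x) <> None) ->
  fst (iter o t G k f) <= S K /\ snd (iter o t G k f) <> None.
Proof.
  intros Ho Hne H. unfold iter. pose proof (Ho t G k (canon G k)) as P.
  destruct (o t G k (canon G k)) as [|x l] eqn:E.
  - apply Permutation_nil in P. congruence.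
  - assert (Hx : In x (canon G k)) by (eapply Permutation_in; eauto; left; auto).
    destruct (H x Hx) as [H1 H2]. destruct (snd (f x)) as [G'|] eqn:E2; [|congruence].
    rewrite (fm_cons _ _ _ _ E2). simpl. split; [lia|congruence].
Qed.

Definition updl {A} (idf : A -> nat) (v : nat) (f : A -> A) (l : list A) : list A :=
  map (fun y => if Nat.eqb (idf y) v then f y else y) l.

Lemma updl_ids {A} (idf : A -> nat) v f l : (forall y, idf (f y) = idf y) ->
  map idf (updl idf v f l) = map idf l.
Proof. intros H. unfold updl. rewrite map_map. apply map_ext. intros y.
  destruct (Nat.eqb (idf y) v); auto. Qed.

Lemma updl_notin {A} (idf : A -> nat) v f l : ~ In v (map idf l) -> updl idf v f l = l.
Proof. induction l as [|y l IH]; simpl; intros H; auto.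
  destruct (Nat.eqb_spec (idf y) v); [tauto|]. f_equal. auto. Qed.

Lemma updl_count {A} (idf : A -> nat) v f (P : A -> bool) l x :
  NoDup (map idf l) -> In x l -> idf x = v ->
  List.length (filter P (updl idf v f l)) + (if P x then 1 else 0) =
  List.length (filter P l) + (if P (f x) then 1 else 0).
Proof.
  induction l as [|y l IH]; simpl; intros ND Hin Hid; [tauto|].
  inversion ND as [|a b H1 H2 E]; subst a b. destruct Hin as [->|Hin].
  - rewrite Hid, Nat.eqb_refl. rewrite updl_notin by (rewrite <- Hid; auto).
    destruct (P (f x)), (P x); simpl; lia.
  - assert (Hy : idf y <> v) by (intros E; apply H1; rewrite E, <- Hid; apply in_map; auto).
    apply Nat.eqb_neq in Hy. rewrite Hy. specialize (IH H2 Hin Hid).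
    destruct (P y); simpl; lia.
Qed.

Lemma updl_filter_same {A} (idf : A -> nat) v f (P : A -> bool) l :
  (forall y, idf (f y) = idf y) ->
  (forall y, In y l -> idf y = v -> P (f y) = P y) ->
  map idf (filter P (updl idf v f l)) = map idf (filter P l).
Proof.
  intros Hf. induction l as [|y l IH]; simpl; intros H; auto.
  destruct (Nat.eqb_spec (idf y) v) as [E|E].
  - rewrite (H y (or_introl eq_refl) E). destruct (P y); simpl; [rewrite Hf; f_equal|]; apply IH; intros; apply H; auto.
  - destruct (P y); simpl; [f_equal|]; apply IH; intros; apply H; auto.
Qed.

Lemma updl_in {A} (idf : A -> nat) v f l z :
  In z (updl idf v f l) <-> exists y, In y l /\ z = (if Nat.eqb (idf y) v then f y else y).
Proof. unfold updl. rewrite in_map_iff. split; intros [y [H1 H2]]; eauto. Qed.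

Lemma filter_and_le {A} (P Q : A -> bool) l :
  List.length (filter (fun x => P x && Q x) l) <= List.length (filter P l).
Proof. induction l as [|y l IH]; simpl; auto. destruct (P y), (Q y); simpl; lia. Qed.

Lemma filter_len_ext {A} (P Q : A -> bool) l : (forall x, In x l -> P x = Q x) ->
  filter P l = filter Q l.
Proof. induction l as [|y l IH]; simpl; intros H; auto.
  rewrite (H y (or_introl eq_refl)). destruct (Q y); [f_equal|]; apply IH; intros; apply H; auto. Qed.

Lemma find_map {A} (p : A -> bool) h l : (forall y, p (h y) = p y) ->
  find p (map h l) = option_map h (find p l).
Proof. intros H. induction l as [|y l IH]; simpl; auto. rewrite H. destruct (p y); auto. Qed.

Lemma find_nodup {A} (idf : A -> nat) l x : NoDup (map idf l) -> In x l ->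
  find (fun y => Nat.eqb (idf y) (idf x)) l = Some x.
Proof.
  induction l as [|y l IH]; simpl; intros ND Hin; [tauto|]. inversion ND; subst.
  destruct Hin as [<-|Hin]. - rewrite Nat.eqb_refl. auto.
  - destruct (Nat.eqb_spec (idf y) (idf x)) as [E|E].
    + exfalso. apply H1. rewrite E. apply in_map. auto.
    + auto.
Qed.

Lemma in_map_filter {A} (idf : A -> nat) (P : A -> bool) l w :
  In w (map idf (filter P l)) <-> exists x, In x l /\ idf x = w /\ P x = true.
Proof. rewrite in_map_iff. split.
  - intros [x [E H]]. apply filter_In in H. exists x. tauto.
  - intros [x [H [E P']]]. exists x. split; auto. apply filter_In. auto. Qed.

Lemma nodup_map_filter {A} (idf : A -> nat) (P : A -> bool) l :
  NoDup (map idf l) -> NoDup (map idf (filter P l)).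
Proof. induction l as [|y l IH]; simpl; intros ND; auto. inversion ND; subst.
  destruct (P y); simpl; auto. constructor; auto. intros Hin. apply H1.
  apply in_map_iff in Hin. destruct Hin as [z [E Hz]]. apply filter_In in Hz.
  rewrite <- E. apply in_map. tauto. Qed.

Lemma len1_in (l : list nat) x : List.length l <= 1 -> In x l -> l = [x].
Proof. destruct l as [|a [|b l]]; simpl; intros; try lia; try tauto.
  destruct H0 as [->|[]]; auto. Qed.


Lemma nmark_beq_eq a b : nmark_beq a b = true <-> a = b.
Proof. destruct a, b; simpl; split; intros; congruence. Qed.
Lemma emark_beq_eq a b : emark_beq a b = true <-> a = b.
Proof. destruct a, b; simpl; split; intros; congruence. Qed.
Lemma nmark_beq_refl a : nmark_beq a a = true.
Proof. destruct a; auto. Qed.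
Lemma emark_beq_refl a : emark_beq a a = true.
Proof. destruct a; auto. Qed.

Definition WF (G : graph) := NoDup (map nid (gnodes G)) /\ NoDup (map eid (gedges G)).

Lemma gopt_S {A} (a : A) k : gopt (Some a) k = (S (fst (k a)), snd (k a)).
Proof. unfold gopt. destruct (k a); auto. Qed.
Lemma gopt_N {A} k : @gopt A None k = (1, None).
Proof. reflexivity. Qed.
Lemma guard_T k : guard true k = (S (fst k), snd k).
Proof. unfold guard. destruct k; auto. Qed.
Lemma guard_F k : guard false k = (1, None).
Proof. reflexivity. Qed.

Definition NidPres (f : node -> node) := forall y, nid (f y) = nid y.
Definition EPres (f : edge -> edge) := forall y, eid (f y) = eid y /\ esrc (f y) = esrc y /\ etgt (f y) = etgt y.

Lemma upd_node_nodes G v f : gnodes (upd_node G v f) = updl nid v f (gnodes G).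
Proof. reflexivity. Qed.
Lemma upd_node_edges G v f : gedges (upd_node G v f) = gedges G.
Proof. reflexivity. Qed.
Lemma upd_edge_edges G v f : gedges (upd_edge G v f) = updl eid v f (gedges G).
Proof. reflexivity. Qed.
Lemma upd_edge_nodes G v f : gnodes (upd_edge G v f) = gnodes G.
Proof. reflexivity. Qed.

Lemma WF_upd_node G v f : NidPres f -> WF G -> WF (upd_node G v f).
Proof. intros Hf [A B]. split; auto. rewrite upd_node_nodes, updl_ids; auto. Qed.
Lemma WF_upd_edge G v f : EPres f -> WF G -> WF (upd_edge G v f).
Proof. intros Hf [A B]. split; auto. rewrite upd_edge_edges, updl_ids; auto. apply Hf. Qed.

Lemma find_node_spec G w x : find_node G w = Some x -> In x (gnodes G) /\ nid x = w.
Proof. unfold find_node. intros H. apply find_some in H. destruct H as [H1 H2].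
  apply Nat.eqb_eq in H2. auto. Qed.
Lemma find_edge_spec G w x : find_edge G w = Some x -> In x (gedges G) /\ eid x = w.
Proof. unfold find_edge. intros H. apply find_some in H. destruct H as [H1 H2].
  apply Nat.eqb_eq in H2. auto. Qed.
Lemma find_node_of G x : WF G -> In x (gnodes G) -> find_node G (nid x) = Some x.
Proof. intros [A _] H. unfold find_node. apply (find_nodup nid); auto. Qed.
Lemma find_edge_of G x : WF G -> In x (gedges G) -> find_edge G (eid x) = Some x.
Proof. intros [_ A] H. unfold find_edge. apply (find_nodup eid); auto. Qed.

Lemma find_node_upd G v f w : NidPres f ->
  find_node (upd_node G v f) w = option_map (fun y => if Nat.eqb (nid y) v then f y else y) (find_node G w).
Proof. intros Hf. unfold find_node. rewrite upd_node_nodes. unfold updl. apply find_map.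
  intros y. destruct (Nat.eqb (nid y) v); rewrite ?Hf; auto. Qed.

Lemma find_node_upd_same G v f x : NidPres f -> find_node G v = Some x ->
  find_node (upd_node G v f) v = Some (f x).
Proof. intros Hf H. rewrite find_node_upd, H by auto. simpl.
  apply find_node_spec in H. destruct H as [_ ->]. rewrite Nat.eqb_refl. auto. Qed.

Lemma find_node_upd_other G v f w : NidPres f -> w <> v ->
  find_node (upd_node G v f) w = find_node G w.
Proof. intros Hf Hw. rewrite find_node_upd by auto. destruct (find_node G w) eqn:E; auto.
  simpl. apply find_node_spec in E. destruct E as [_ ->]. apply Nat.eqb_neq in Hw. rewrite Hw. auto. Qed.

Lemma find_edge_upd G v f w : EPres f ->
  find_edge (upd_edge G v f) w = option_map (fun y => if Nat.eqb (eid y) v then f y else y) (find_edge G w).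
Proof. intros Hf. unfold find_edge. rewrite upd_edge_edges. unfold updl. apply find_map.
  intros y. destruct (Nat.eqb (eid y) v); rewrite ?(proj1 (Hf y)); auto. Qed.

Lemma in_canon_nodes G m w : In w (canon G (KNodes m)) <-> exists x, In x (gnodes G) /\ nid x = w /\ nmk x = m.
Proof. simpl. rewrite in_map_filter. split; intros [x [A [B C]]]; exists x; repeat split; auto;
  [apply nmark_beq_eq; auto | apply nmark_beq_eq; auto]. Qed.
Lemma in_canon_roots G w : In w (canon G KRoots) <-> exists x, In x (gnodes G) /\ nid x = w /\ nroot x = true.
Proof. simpl. rewrite in_map_filter. tauto. Qed.
Lemma in_canon_edges G v m o w : In w (canon G (KEdges v m o)) <->
  exists x, In x (gedges G) /\ eid x = w /\ emk x = m /\ orient_ok o v x = true.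
Proof. simpl. rewrite in_map_filter. split; intros [x [A [B C]]]; exists x; repeat split; auto.
  - apply andb_prop in C. apply emark_beq_eq. tauto.
  - apply andb_prop in C. tauto.
  - destruct C as [C D]. rewrite C, emark_beq_refl. auto. Qed.

Lemma canon_nodup G k : WF G -> NoDup (canon G k).
Proof. intros [A B]. destruct k; simpl; apply nodup_map_filter; auto. Qed.

Definition ncnt (G : graph) (P : node -> bool) := List.length (filter P (gnodes G)).
Definition ecnt (G : graph) (P : edge -> bool) := List.length (filter P (gedges G)).

Lemma canon_nodes_len G m : List.length (canon G (KNodes m)) = ncnt G (fun x => nmark_beq (nmk x) m).
Proof. simpl. rewrite length_map. reflexivity. Qed.
Lemma canon_roots_len G : List.length (canon G KRoots) = ncnt G nroot.
Proof. simpl. rewrite length_map. reflexivity. Qed.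

Lemma ncnt_upd G v f P x : NidPres f -> WF G -> In x (gnodes G) -> nid x = v ->
  ncnt (upd_node G v f) P + (if P x then 1 else 0) = ncnt G P + (if P (f x) then 1 else 0).
Proof. intros Hf [A _] H1 H2. unfold ncnt. rewrite upd_node_nodes. apply updl_count; auto. Qed.
Lemma ecnt_upd G v f P x : EPres f -> WF G -> In x (gedges G) -> eid x = v ->
  ecnt (upd_edge G v f) P + (if P x then 1 else 0) = ecnt G P + (if P (f x) then 1 else 0).
Proof. intros Hf [_ A] H1 H2. unfold ecnt. rewrite upd_edge_edges. apply updl_count; auto. Qed.

Lemma canon_nodes_upd_same G v f m : NidPres f ->
  (forall y, In y (gnodes G) -> nid y = v -> nmark_beq (nmk (f y)) m = nmark_beq (nmk y) m) ->
  canon (upd_node G v f) (KNodes m) = canon G (KNodes m).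
Proof. intros Hf H. simpl. apply (updl_filter_same nid v f (fun y => nmark_beq (nmk y) m)); auto. Qed.
Lemma canon_roots_upd_same G v f : NidPres f ->
  (forall y, In y (gnodes G) -> nid y = v -> nroot (f y) = nroot y) ->
  canon (upd_node G v f) KRoots = canon G KRoots.
Proof. intros Hf H. simpl. apply (updl_filter_same nid v f nroot); auto. Qed.
Lemma canon_edges_upd_same G e f v m o : EPres f ->
  (forall y, In y (gedges G) -> eid y = e -> emark_beq (emk (f y)) m && orient_ok o v (f y) = emark_beq (emk y) m && orient_ok o v y) ->
  canon (upd_edge G e f) (KEdges v m o) = canon G (KEdges v m o).
Proof. intros Hf H. simpl. apply (updl_filter_same eid e f); auto. apply Hf. Qed.

Lemma degree_upd_edge G e f w : EPres f -> degree (upd_edge G e f) w = degree G w.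
Proof. intros Hf. unfold degree. rewrite upd_edge_edges. unfold updl.
  rewrite filter_map_swap, length_map. f_equal. apply filter_len_ext. intros y _.
  destruct (Nat.eqb (eid y) e); auto. destruct (Hf y) as [_ [-> ->]]. auto. Qed.


Lemma blue_root_single o t G v x k : valid_oracle o -> canon G KRoots = [v] ->
  find_node G v = Some x -> nmk x = NBlue ->
  fst (blue_root o t G k) <= 4 + fst (k v x) /\ snd (blue_root o t G k) = snd (k v x).
Proof.
  intros Ho Hr Hf Hb. unfold blue_root.
  destruct (iter_single o t G KRoots (fun v0 => gopt (find_node G v0) (fun x0 =>
    guard (nmark_beq (nmk x0) NBlue) (k v0 x0))) v Ho Hr) as [A B].
  cbv beta in A, B. rewrite Hf, gopt_S, Hb in *. simpl nmark_beq in *. rewrite guard_T in *. cbn [fst snd] in *. split; [lia|auto].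
Qed.

Definition edge_step o t G v m m' :=
  iter o t G (KEdges v m OOut) (fun e => gopt (find_edge G e) (fun ed =>
      guard (negb (Nat.eqb (etgt ed) v)) (done (upd_edge G e (set_emark m'))))).

Lemma edge_step_spec o t G v m m' : valid_oracle o -> WF G ->
  fst (edge_step o t G v m m') <= 4 /\
  (canon G (KEdges v m OOut) = [] -> snd (edge_step o t G v m m') = None) /\
  (canon G (KEdges v m OOut) <> [] -> snd (edge_step o t G v m m') <> None) /\
  (forall G', snd (edge_step o t G v m m') = Some G' -> exists ed, In ed (gedges G) /\
     emk ed = m /\ esrc ed = v /\ etgt ed <> v /\ G' = upd_edge G (eid ed) (set_emark m')).
Proof.
  intros Ho HW. unfold edge_step.
  set (F := fun e => gopt (find_edge G e) (fun ed =>
      guard (negb (Nat.eqb (etgt ed) v)) (done (upd_edge G e (set_emark m'))))).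
  assert (Hx : forall e, In e (canon G (KEdges v m OOut)) -> exists ed,
     find_edge G e = Some ed /\ In ed (gedges G) /\ eid ed = e /\ emk ed = m /\ esrc ed = v /\ etgt ed <> v).
  { intros e He. apply in_canon_edges in He. destruct He as [ed [H1 [H2 [H3 H4]]]].
    exists ed. simpl in H4. apply andb_prop in H4. destruct H4 as [H4 H5].
    apply Nat.eqb_eq in H4. apply negb_true_iff, Nat.eqb_neq in H5.
    subst e. rewrite find_edge_of by auto. repeat split; auto. }
  assert (Hf : forall e, In e (canon G (KEdges v m OOut)) ->
    fst (F e) <= 3 /\ snd (F e) = Some (upd_edge G e (set_emark m'))).
  { intros e He. unfold F. destruct (Hx e He) as [ed [E [_ [_ [_ [_ Ht]]]]]]. rewrite E, gopt_S. simpl.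
    apply Nat.eqb_neq in Ht. rewrite Ht. simpl. auto. }
  destruct (canon G (KEdges v m OOut)) as [|e0 l] eqn:Ec.
  - rewrite iter_nil by auto. simpl. repeat split; try lia; try congruence; intros; discriminate.
  - rewrite <- Ec in *.
    destruct (iter_all o t G (KEdges v m OOut) F 3 Ho ltac:(rewrite Ec; discriminate)) as [A B].
    { intros x Hin. destruct (Hf x Hin) as [H1 H2]. rewrite H2. split; auto. discriminate. }
    repeat split; auto; try (rewrite Ec; discriminate).
    intros G' HG'. apply iter_some in HG'; auto. destruct HG' as [e [He HG']].
    destruct (Hf e He) as [_ H2]. rewrite H2 in HG'. inversion HG'; subst.
    destruct (Hx e He) as [ed [_ [H1 [H2' [H3 [H4 H5]]]]]]. exists ed. repeat split; auto. subst; auto.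
Qed.


Ltac crunch := repeat (first [ rewrite gopt_S | rewrite gopt_N | rewrite guard_T | rewrite guard_F
   | progress cbn beta iota
   | match goal with |- context [gopt ?x _] => destruct x | |- context [guard ?b _] => destruct b
       | |- context [match ?p with (_, _) => _ end] => destruct p end ]);
   unfold done in *; cbn [fst snd] in *; try lia.

Lemma edge_rule_spec o t G v x m m' : valid_oracle o -> WF G -> canon G KRoots = [v] ->
  find_node G v = Some x -> nmk x = NBlue ->
  fst (blue_root o t G (fun v _ => edge_step o t G v m m')) <= 8 /\
  snd (blue_root o t G (fun v _ => edge_step o t G v m m')) = snd (edge_step o t G v m m').
Proof. intros Ho HW Hr Hf Hb.
  destruct (blue_root_single o t G v x (fun v _ => edge_step o t G v m m') Ho Hr Hf Hb) as [A B].
  destruct (edge_step_spec o t G v m m' Ho HW) as [C _]. cbv beta in *. split; [lia|auto]. Qed.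

Lemma no_deg_spec o t G v x : valid_oracle o -> canon G KRoots = [v] ->
  find_node G v = Some x -> nmk x = NBlue ->
  fst (r_no_deg o t G) <= 6 /\
  snd (r_no_deg o t G) = if Nat.eqb (degree G v) 0 then
     Some (upd_node G v (fun y => set_root false (set_mark NUn y))) else None.
Proof. intros Ho Hr Hf Hb. unfold r_no_deg.
  match goal with |- context [blue_root o t G ?k] =>
    destruct (blue_root_single o t G v x k Ho Hr Hf Hb) as [A B] end.
  cbv beta in *. rewrite B. destruct (Nat.eqb (degree G v) 0); simpl in *; split; auto; lia. Qed.

Lemma unroot1_spec o t G v x : valid_oracle o -> canon G KRoots = [v] ->
  find_node G v = Some x -> nmk x = NBlue ->
  fst (r_unroot1 o t G) <= 5 /\
  snd (r_unroot1 o t G) = Some (upd_node G v (fun y => set_root false (set_mark NGrey y))).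
Proof. intros Ho Hr Hf Hb. unfold r_unroot1.
  match goal with |- context [blue_root o t G ?k] =>
    destruct (blue_root_single o t G v x k Ho Hr Hf Hb) as [A B] end.
  cbv beta in *. rewrite B. simpl in *. split; auto; lia. Qed.

Lemma unroot2_spec o t G v x : valid_oracle o -> canon G KRoots = [v] ->
  find_node G v = Some x -> nmk x = NBlue ->
  fst (r_unroot2 o t G) <= 5 /\
  snd (r_unroot2 o t G) = Some (upd_node G v (set_root false)).
Proof. intros Ho Hr Hf Hb. unfold r_unroot2.
  match goal with |- context [blue_root o t G ?k] =>
    destruct (blue_root_single o t G v x k Ho Hr Hf Hb) as [A B] end.
  cbv beta in *. rewrite B. simpl in *. split; auto; lia. Qed.

Lemma root_rule_spec o t G m f : valid_oracle o ->
  let r := iter o t G (KNodes m) (fun v => done (upd_node G v f)) in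
  (canon G (KNodes m) = [] /\ r = (1, None)) \/
  (exists v, In v (canon G (KNodes m)) /\ r = (2, Some (upd_node G v f))).
Proof. intros Ho r. destruct (canon G (KNodes m)) eqn:E.
  - left. split; auto. unfold r. apply iter_nil; auto.
  - right. unfold r, iter. pose proof (Ho t G (KNodes m) (canon G (KNodes m))) as P.
    destruct (o t G (KNodes m) (canon G (KNodes m))) as [|x l'] eqn:E2.
    + apply Permutation_nil in P. congruence.
    + exists x. split. * rewrite <- E. eapply Permutation_in; [exact P|]. left; auto.
      * simpl. auto.
Qed.

Lemma unv_spec o t G v x : valid_oracle o -> canon G KRoots = [v] ->
  find_node G v = Some x -> nmk x = NBlue ->
  List.length (canon G (KEdges v ERed OOut)) <= 1 ->
  (fst (r_unvisited o t G) <= 20 /\ (snd (r_unvisited o t G) = None \/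
     exists ed l, In ed (gedges G) /\ snd (r_unvisited o t G) = Some (upd_node G (etgt ed) (set_lab l)))) /\
  (fst (r_reduce o t G) <= 20 /\ (snd (r_reduce o t G) = None \/
     exists ed l, In ed (gedges G) /\ snd (r_reduce o t G) = Some (upd_node G (etgt ed) (set_lab l)))).
Proof.
  intros Ho Hr Hf Hb Hl. split.
  - unfold r_unvisited.
    match goal with |- context [blue_root o t G ?k] =>
      destruct (blue_root_single o t G v x k Ho Hr Hf Hb) as [A B] end.
    cbv beta in A, B. rewrite B.
    destruct (last_int (nlab x)) as [[y s]|] eqn:EL; rewrite ?gopt_S, ?gopt_N in *; cbn beta iota in *; cbn [fst snd] in *.
    2:{ split; [lia|auto]. }
    match goal with |- context [iter o t G ?k ?F] => set (FF := F) in * end.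
    assert (Hc : forall e, fst (FF e) <= 6).
    { intros e. unfold FF. crunch. }
    pose proof (iter_bound o t G (KEdges v ERed OOut) FF 6 Ho (fun e _ => Hc e)) as Hb2.
    split; [nia|].
    destruct (snd (iter o t G (KEdges v ERed OOut) FF)) as [G'|] eqn:ES; [right|left; auto].
    apply iter_some in ES; auto. destruct ES as [e [_ ES]]. unfold FF in ES.
    destruct (find_edge G e) as [ed|] eqn:E1; [|discriminate]. rewrite gopt_S in ES. cbn beta in ES.
    destruct (single_int (elab ed)) as [w|]; [|discriminate]. rewrite gopt_S in ES. cbn beta in ES.
    destruct (negb (Nat.eqb (etgt ed) v)); [|discriminate]. rewrite guard_T in ES.
    destruct (find_node G (etgt ed)) as [x2|]; [|discriminate]. rewrite gopt_S in ES. cbn beta in ES.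
    destruct (last_str (nlab x2) "f") as [yy|]; [|discriminate]. rewrite gopt_S in ES. cbn in ES.
    inversion ES. exists ed, (yy ++ [AInt (s + w)]). split; auto. apply find_edge_spec in E1. tauto.
  - unfold r_reduce.
    match goal with |- context [blue_root o t G ?k] =>
      destruct (blue_root_single o t G v x k Ho Hr Hf Hb) as [A B] end.
    cbv beta in A, B. rewrite B.
    destruct (last_int (nlab x)) as [[y s]|] eqn:EL; rewrite ?gopt_S, ?gopt_N in *; cbn beta iota in *; cbn [fst snd] in *.
    2:{ split; [lia|auto]. }
    match goal with |- context [iter o t G ?k ?F] => set (FF := F) in * end.
    assert (Hc : forall e, fst (FF e) <= 7).
    { intros e. unfold FF. crunch. }
    pose proof (iter_bound o t G (KEdges v ERed OOut) FF 7 Ho (fun e _ => Hc e)) as Hb2.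
    split; [nia|].
    destruct (snd (iter o t G (KEdges v ERed OOut) FF)) as [G'|] eqn:ES; [right|left; auto].
    apply iter_some in ES; auto. destruct ES as [e [_ ES]]. unfold FF in ES.
    destruct (find_edge G e) as [ed|] eqn:E1; [|discriminate]. rewrite gopt_S in ES. cbn beta in ES.
    destruct (single_int (elab ed)) as [w|]; [|discriminate]. rewrite gopt_S in ES. cbn beta in ES.
    destruct (negb (Nat.eqb (etgt ed) v)); [|discriminate]. rewrite guard_T in ES.
    destruct (find_node G (etgt ed)) as [x2|]; [|discriminate]. rewrite gopt_S in ES. cbn beta in ES.
    destruct (last_int (nlab x2)) as [[yy tv]|]; [|discriminate]. rewrite gopt_S in ES. cbn beta iota in ES.
    destruct (Z.ltb (s + w) tv); [|discriminate]. rewrite guard_T in ES. cbn in ES.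
    inversion ES. exists ed, (yy ++ [AInt (s + w)]). split; auto. apply find_edge_spec in E1. tauto.
Qed.


Lemma green_node G g : WF G -> canon G (KNodes NGreen) = [g] ->
  exists xg, find_node G g = Some xg /\ nmk xg = NGreen /\ In xg (gnodes G) /\ nid xg = g.
Proof. intros HW Hg. assert (H : In g (canon G (KNodes NGreen))) by (rewrite Hg; left; auto).
  apply in_canon_nodes in H. destruct H as [x [H1 [H2 H3]]]. exists x. subst g.
  rewrite find_node_of by auto. auto. Qed.

Lemma decrement_spec o t G g xg k : valid_oracle o -> canon G (KNodes NGreen) = [g] ->
  find_node G g = Some xg -> nlab xg = [AInt k] ->
  fst (r_decrement o t G) <= 6 /\
  snd (r_decrement o t G) = if Z.ltb 0 k then Some (upd_node G g (set_lab [AInt (k - 1)])) else None.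
Proof. intros Ho Hg Hf Hl. unfold r_decrement.
  match goal with |- context [iter o t G ?k ?F] =>
    destruct (iter_single o t G k F g Ho Hg) as [A B] end.
  cbv beta in A, B. rewrite Hf, gopt_S in A, B. cbv beta in A, B. rewrite Hl in A, B. simpl single_int in A, B.
  rewrite gopt_S in A, B. cbv beta in A, B. rewrite B.
  destruct (Z.ltb 0 k); simpl in *; split; auto; lia. Qed.

Lemma set_flag_spec o t G g : valid_oracle o -> canon G (KNodes NGreen) = [g] ->
  fst (r_set_flag o t G) <= 6 /\
  (snd (r_set_flag o t G) = None \/ snd (r_set_flag o t G) = Some (upd_node G g (set_lab [AInt (-1)]))).
Proof. intros Ho Hg. unfold r_set_flag.
  match goal with |- context [iter o t G ?k ?F] =>
    destruct (iter_single o t G k F g Ho Hg) as [A B] end.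
  cbv beta in A, B. rewrite B. split.
  - revert A. crunch.
  - destruct (find_node G g); [rewrite gopt_S|rewrite gopt_N]; cbv beta; auto.
    destruct (single_int (nlab n)); [rewrite gopt_S|rewrite gopt_N]; cbv beta; auto.
Qed.

Lemma flag_spec o t G g : valid_oracle o -> canon G (KNodes NGreen) = [g] ->
  fst (r_flag o t G) <= 7.
Proof. intros Ho Hg. unfold r_flag.
  match goal with |- context [iter o t G ?k ?F] =>
    destruct (iter_single o t G k F g Ho Hg) as [A B] end.
  cbv beta in A, B. revert A. crunch. Qed.

Lemma canon_edges_len G v m o : List.length (canon G (KEdges v m o)) <= List.length (gedges G).
Proof. simpl. rewrite length_map. apply filter_length_le. Qed.

Lemma WF_del_node G v : WF G -> WF (del_node G v).
Proof. intros [A B]. split; auto. simpl. apply nodup_map_filter. auto. Qed.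
Lemma WF_del_edge G v : WF G -> WF (del_edge G v).
Proof. intros [A B]. split; auto. simpl. apply nodup_map_filter. auto. Qed.

Lemma delete_counter_spec o t G g : valid_oracle o -> WF G -> canon G (KNodes NGreen) = [g] ->
  fst (r_delete_counter o t G) <= 3 + 5 * List.length (gedges G) /\
  (forall G', snd (r_delete_counter o t G) = Some G' -> WF G' /\ List.length (gnodes G') <= List.length (gnodes G)).
Proof. intros Ho HW Hg. unfold r_delete_counter.
  match goal with |- context [iter o t G ?k ?F] =>
    destruct (iter_single o t G k F g Ho Hg) as [A B] end.
  cbv beta in A, B.
  match goal with A : context [iter o t G (KEdges g EDashed OOut) ?F] |- _ => set (FF := F) in * end.
  assert (Hc : forall e, fst (FF e) <= 4) by (intros e; unfold FF; crunch).
  pose proof (iter_bound o t G (KEdges g EDashed OOut) FF 4 Ho (fun e _ => Hc e)) as Hb2.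
  pose proof (canon_edges_len G g EDashed OOut). split; [nia|].
  intros G' HG'. rewrite B in HG'. apply iter_some in HG'; auto. destruct HG' as [e [_ HG']].
  unfold FF in HG'. destruct (find_edge G e) as [ed|]; [|discriminate]. rewrite gopt_S in HG'. cbv beta in HG'.
  destruct (negb (Nat.eqb (etgt ed) g)); [|discriminate]. rewrite guard_T in HG'.
  destruct (Nat.eqb (degree G g) 1); [|discriminate]. rewrite guard_T in HG'. simpl in HG'.
  inversion HG'; subst. split.
  - apply WF_upd_node; [intros y; reflexivity|]. apply WF_del_node, WF_del_edge; auto.
  - rewrite upd_node_nodes. unfold updl. rewrite length_map. simpl. apply filter_length_le.
Qed.

Definition fblue (y : node) := mkNode (nid y) (nlab y ++ [AStr "f"%string]) NBlue (nroot y).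

Lemma count_spec o t G g xg k : valid_oracle o -> WF G -> canon G (KNodes NGreen) = [g] ->
  find_node G g = Some xg -> nlab xg = [AInt k] ->
  (canon G (KNodes NGrey) = [] -> r_count o t G = (1, None)) /\
  (canon G (KNodes NGrey) <> [] -> fst (r_count o t G) <= 8 /\ exists x1, In x1 (gnodes G) /\ nmk x1 = NGrey /\
     snd (r_count o t G) = Some (upd_node (upd_node G (nid x1) fblue) g (set_lab [AInt (k + 1)]))).
Proof. intros Ho HW Hg Hf Hl. split.
  - intros E. unfold r_count. apply iter_nil; auto.
  - intros Hne. unfold r_count.
    match goal with |- context [iter o t G (KNodes NGrey) ?F] => set (FF := F) end.
    destruct (green_node G g HW Hg) as [xg' [Hf' [Hgm _]]]. rewrite Hf in Hf'. inversion Hf'; subst xg'.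
    assert (HF : forall v1, In v1 (canon G (KNodes NGrey)) -> exists x1, In x1 (gnodes G) /\ nid x1 = v1 /\ nmk x1 = NGrey /\
       fst (FF v1) <= 7 /\ snd (FF v1) = Some (upd_node (upd_node G v1 fblue) g (set_lab [AInt (k + 1)]))).
    { intros v1 Hv1. apply in_canon_nodes in Hv1. destruct Hv1 as [x1 [H1 [H2 H3]]]. exists x1.
      subst v1.
      assert (Hne' : Nat.eqb (nid x1) g = false) by
             (apply Nat.eqb_neq; intros E; rewrite <- E in Hf; rewrite find_node_of in Hf by auto;
              inversion Hf; subst; congruence).
      unfold FF. rewrite (find_node_of G x1 HW H1), gopt_S. cbv beta.
      match goal with |- context [iter o t G (KNodes NGreen) ?F] =>
             destruct (iter_single o t G (KNodes NGreen) F g Ho Hg) as [A B] end.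
      cbv beta in A, B.
      rewrite Hne' in A, B; simpl negb in A, B; rewrite guard_T, Hf, gopt_S in A, B; cbv beta in A, B;
           rewrite Hl in A, B; simpl single_int in A, B; rewrite gopt_S in A, B; cbv beta in A, B.
      repeat split; auto.
      all: first [ (simpl in A |- *; lia) | (simpl; rewrite B; reflexivity) ]. }
    destruct (iter_all o t G (KNodes NGrey) FF 7 Ho Hne) as [A B].
    { intros x Hx. destruct (HF x Hx) as [x1 [_ [_ [_ [C D]]]]]. rewrite D. split; auto. discriminate. }
    split; auto.
    destruct (snd (iter o t G (KNodes NGrey) FF)) as [G'|] eqn:ES; [|congruence].
    apply iter_some in ES; auto. destruct ES as [v1 [Hv1 ES]].
    destruct (HF v1 Hv1) as [x1 [H1 [H2 [H3 [_ H5]]]]]. exists x1. repeat split; auto.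
    rewrite H5 in ES. subst v1. congruence.
Qed.


Definition NSH (G : graph) := map (fun x => (nid x, nmk x, nroot x)) (gnodes G).
Definition ES (G : graph) := map (fun e => (eid e, esrc e, etgt e)) (gedges G).
Definition labg (G : graph) (g : nat) := option_map nlab (find_node G g).
Definition B5 (G : graph) (g : nat) := forall e, In e (gedges G) -> etgt e <> g.
Definition ecm (G : graph) (m : emark) := ecnt G (fun e => emark_beq (emk e) m).
Definition ncm (G : graph) (m : nmark) := List.length (canon G (KNodes m)).
Definition Pm (G : graph) (m : nmark) := forall w, In w (canon G (KNodes m)) -> degree G w <> 0.

Lemma NSH_len G G' : NSH G = NSH G' -> List.length (gnodes G) = List.length (gnodes G').
Proof. intros H. unfold NSH in H. rewrite <- (length_map (fun x => (nid x, nmk x, nroot x)) (gnodes G)), H, length_map. auto. Qed.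
Lemma len_upd_node G v f : List.length (gnodes (upd_node G v f)) = List.length (gnodes G).
Proof. rewrite upd_node_nodes. unfold updl. apply length_map. Qed.

Lemma canon_nodes_NSH G m : canon G (KNodes m) =
  map (fun p => fst (fst p)) (filter (fun p => nmark_beq (snd (fst p)) m) (NSH G)).
Proof. unfold NSH. rewrite filter_map_swap, map_map. reflexivity. Qed.
Lemma canon_roots_NSH G : canon G KRoots =
  map (fun p => fst (fst p)) (filter (fun p => snd p) (NSH G)).
Proof. unfold NSH. rewrite filter_map_swap, map_map. reflexivity. Qed.
Lemma degree_ES G w : degree G w =
  List.length (filter (fun p => Nat.eqb (snd (fst p)) w || Nat.eqb (snd p) w) (ES G)).
Proof. unfold degree, ES. rewrite filter_map_swap, length_map. reflexivity. Qed.

Lemma T1 G G' m : NSH G = NSH G' -> canon G (KNodes m) = canon G' (KNodes m).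
Proof. intros H. rewrite !canon_nodes_NSH, H. auto. Qed.
Lemma T2 G G' : NSH G = NSH G' -> canon G KRoots = canon G' KRoots.
Proof. intros H. rewrite !canon_roots_NSH, H. auto. Qed.
Lemma T3 G G' w : ES G = ES G' -> degree G w = degree G' w.
Proof. intros H. rewrite !degree_ES, H. auto. Qed.
Lemma T4 G G' : NSH G = NSH G' -> ES G = ES G' -> WF G -> WF G'.
Proof. intros H1 H2 [A B]. split.
  - replace (map nid (gnodes G')) with (map (fun p => fst (fst p)) (NSH G')).
    + rewrite <- H1. unfold NSH. rewrite map_map. auto.
    + unfold NSH. rewrite map_map. auto.
  - replace (map eid (gedges G')) with (map (fun p => fst (fst p)) (ES G')).
    + rewrite <- H2. unfold ES. rewrite map_map. auto.
    + unfold ES. rewrite map_map. auto.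
Qed.
Lemma T5 G G' g : ES G = ES G' -> B5 G g -> B5 G' g.
Proof. intros H HB e He. assert (Hin : In (eid e, esrc e, etgt e) (ES G')) by (unfold ES; apply in_map_iff; eauto).
  rewrite <- H in Hin. unfold ES in Hin. apply in_map_iff in Hin. destruct Hin as [e' [E He']].
  injection E as E1 E2 E3. rewrite <- E3. auto. Qed.
Lemma T6 G G' m : NSH G = NSH G' -> ES G = ES G' -> Pm G m -> Pm G' m.
Proof. intros H1 H2 HP w Hw. rewrite <- (T1 G G' m H1) in Hw. rewrite <- (T3 G G' w H2). auto. Qed.

Lemma map_updl_same {A B} (idf : A -> nat) v f l (p : A -> B) : (forall y, p (f y) = p y) ->
  map p (updl idf v f l) = map p l.
Proof. intros H. unfold updl. rewrite map_map. apply map_ext. intros y. destruct (Nat.eqb (idf y) v); auto. Qed.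

Lemma NSH_lab G w l : NSH (upd_node G w (set_lab l)) = NSH G.
Proof. unfold NSH. rewrite upd_node_nodes. apply map_updl_same. auto. Qed.
Lemma ES_emark G e m : ES (upd_edge G e (set_emark m)) = ES G.
Proof. unfold ES. rewrite upd_edge_edges. apply map_updl_same. auto. Qed.
Lemma EPres_emark m : EPres (set_emark m).
Proof. intros y. simpl. auto. Qed.

Lemma canon_node_find G v m : WF G -> In v (canon G (KNodes m)) ->
  exists x, find_node G v = Some x /\ nmk x = m /\ In x (gnodes G).
Proof. intros HW H. apply in_canon_nodes in H. destruct H as [x [H1 [H2 H3]]]. subst v.
  exists x. rewrite find_node_of by auto. auto. Qed.

Lemma redout_le G v : List.length (canon G (KEdges v ERed OOut)) <= ecm G ERed.
Proof. simpl. rewrite length_map. unfold ecm, ecnt. apply filter_and_le. Qed.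

Lemma unmarked_edge_eq o t G : r_unmarked_edge o t G = blue_root o t G (fun v _ => edge_step o t G v EUn ERed).
Proof. reflexivity. Qed.
Lemma finish_eq o t G : r_finish o t G = blue_root o t G (fun v _ => edge_step o t G v ERed EBlue).
Proof. reflexivity. Qed.
Lemma unmark_edge_eq o t G : r_unmark_edge o t G = blue_root o t G (fun v _ => edge_step o t G v EBlue EUn).
Proof. reflexivity. Qed.

Lemma edge_rule_full o t G v m m' : valid_oracle o -> WF G -> canon G KRoots = [v] ->
  In v (canon G (KNodes NBlue)) ->
  let r := blue_root o t G (fun v _ => edge_step o t G v m m') in
  fst r <= 8 /\ (forall G', snd r = Some G' -> exists ed, In ed (gedges G) /\
     emk ed = m /\ esrc ed = v /\ etgt ed <> v /\ G' = upd_edge G (eid ed) (set_emark m')).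
Proof. intros Ho HW Hr Hv r. destruct (canon_node_find G v NBlue HW Hv) as [x [Hf [Hb _]]].
  destruct (edge_rule_spec o t G v x m m' Ho HW Hr Hf Hb) as [A B].
  destruct (edge_step_spec o t G v m m' Ho HW) as [_ [_ [_ D]]].
  split; auto. intros G' HG'. apply D. unfold r in HG'. rewrite <- B. auto. Qed.

Lemma ecm_upd_emark G ed m m' mm : WF G -> In ed (gedges G) -> emk ed = m ->
  ecm (upd_edge G (eid ed) (set_emark m')) mm + (if emark_beq m mm then 1 else 0) =
  ecm G mm + (if emark_beq m' mm then 1 else 0).
Proof. intros HW Hin Hm. unfold ecm.
  pose proof (ecnt_upd G (eid ed) (set_emark m') (fun e => emark_beq (emk e) mm) ed (EPres_emark m') HW Hin eq_refl) as H.
  simpl in H. rewrite Hm in H. exact H. Qed.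

Lemma inner_loop o (MID : cmd) Km (X : graph -> Prop) v :
  valid_oracle o ->
  (forall G e m, X G -> X (upd_edge G e (set_emark m))) ->
  (forall G t, WF G -> canon G KRoots = [v] -> In v (canon G (KNodes NBlue)) ->
     List.length (canon G (KEdges v ERed OOut)) <= 1 -> X G ->
     Runs o MID t G (fun r t' => t' <= t + Km /\ match r with None => True
        | Some G' => NSH G' = NSH G /\ gedges G' = gedges G /\ X G' end)) ->
  forall G0 t, WF G0 -> canon G0 KRoots = [v] -> In v (canon G0 (KNodes NBlue)) -> ecm G0 ERed = 0 -> X G0 ->
  Runs o (Loop (Seq (R r_unmarked_edge) (Seq MID (R r_finish)))) t G0
    (fun r t' => exists G', r = Some G' /\ NSH G' = NSH G0 /\ ES G' = ES G0 /\ ecm G' ERed = 0 /\ X G' /\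
        t' + (Km + 20) * ecm G' EUn <= t + (Km + 20) * ecm G0 EUn + 2 * (Km + 20)).
Proof.
  intros Ho HX HM G0 t HW0 Hr0 Hv0 Hred0 HX0.
  set (Inv := fun G => NSH G = NSH G0 /\ ES G = ES G0 /\ ecm G ERed = 0 /\ X G).
  assert (HI0 : Inv G0) by (repeat split; auto).
  eapply runs_mono.
  - apply (runs_loop o _ Inv (fun G => (Km + 20) * ecm G EUn) (fun _ => True) (Km + 20)); [|exact HI0].
    intros G t1 [HN [HE [Hred HXG]]].
    assert (HW : WF G) by (apply (T4 G0 G); auto).
    assert (Hr : canon G KRoots = [v]) by (rewrite (T2 G G0); auto).
    assert (Hv : In v (canon G (KNodes NBlue))) by (rewrite (T1 G G0 NBlue); auto).
    apply runs_seq with (Q1 := fun r t2 => t2 <= t1 + 8 /\ forall G1, r = Some G1 -> exists ed, In ed (gedges G) /\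
        emk ed = EUn /\ esrc ed = v /\ etgt ed <> v /\ G1 = upd_edge G (eid ed) (set_emark ERed)).
    + apply runs_R. rewrite unmarked_edge_eq.
      destruct (edge_rule_full o t1 G v EUn ERed Ho HW Hr Hv) as [A B]. split; [lia|]. intros G1 E. apply B; auto.
    + intros G1 t2 [Ht2 HG1]. destruct (HG1 G1 eq_refl) as [ed [Hin [Hm [Hs [Ht ->]]]]].
      set (G1 := upd_edge G (eid ed) (set_emark ERed)).
      assert (HW1 : WF G1) by (apply WF_upd_edge; auto; apply EPres_emark).
      assert (Hred1 : ecm G1 ERed = 1) by (pose proof (ecm_upd_emark G ed EUn ERed ERed HW Hin Hm) as HH; fold G1 in HH; cbn [emark_beq] in HH; lia).
      assert (HU1 : ecm G1 EUn + 1 = ecm G EUn) by (pose proof (ecm_upd_emark G ed EUn ERed EUn HW Hin Hm) as HH; fold G1 in HH; cbn [emark_beq] in HH; lia).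
      apply runs_seq with (Q1 := fun r t' => t' <= t2 + Km /\ match r with None => True
        | Some G' => NSH G' = NSH G1 /\ gedges G' = gedges G1 /\ X G' end).
      * apply HM; auto.
        all: first [exact Hr | exact Hv | (pose proof (redout_le G1 v); lia) | (apply HX; auto)].
      * intros G2 t3 [Ht3 [HN2 [HE2 HX2]]].
        assert (HES2 : ES G2 = ES G1) by (unfold ES; rewrite HE2; auto).
        assert (HW2 : WF G2) by (apply (T4 G1 G2); auto).
        assert (Hr2 : canon G2 KRoots = [v]) by (rewrite (T2 G2 G1); auto).
        assert (Hv2 : In v (canon G2 (KNodes NBlue))) by (rewrite (T1 G2 G1 NBlue); auto).
        assert (Hred2 : ecm G2 ERed = 1) by (unfold ecm, ecnt; rewrite HE2; auto).
        assert (HU2 : ecm G2 EUn = ecm G1 EUn) by (unfold ecm, ecnt; rewrite HE2; auto).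
        apply runs_R. rewrite finish_eq.
        destruct (edge_rule_full o t3 G2 v ERed EBlue Ho HW2 Hr2 Hv2) as [A B].
        destruct (snd (blue_root o t3 G2 (fun v _ => edge_step o t3 G2 v ERed EBlue))) as [G3|] eqn:E3.
        -- destruct (B G3 eq_refl) as [ed' [Hin' [Hm' [Hs' [Ht' ->]]]]]. split.
           ++ repeat split.
              ** unfold NSH. simpl. fold (NSH G2). rewrite HN2. unfold G1, NSH. auto.
              ** rewrite ES_emark, HES2. unfold G1. rewrite ES_emark. auto.
              ** pose proof (ecm_upd_emark G2 ed' ERed EBlue ERed HW2 Hin' Hm') as HH. cbn [emark_beq] in HH. lia.
              ** apply HX; auto.
           ++ pose proof (ecm_upd_emark G2 ed' ERed EBlue EUn HW2 Hin' Hm') as HH. cbn [emark_beq] in HH. nia.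
        -- split; auto. lia.
      * intros t3 [Ht3 _]. split; auto. lia.
    + intros t2 [Ht2 _]. split; auto. lia.
  - intros r t' [G' [-> [[A [B [C D]]] [_ E]]]]. exists G'. repeat split; auto.
Qed.


Lemma find_uniq G v x y : WF G -> find_node G v = Some x -> In y (gnodes G) -> nid y = v -> y = x.
Proof. intros HW Hf Hy Hid. subst v. rewrite find_node_of in Hf by auto. congruence. Qed.

Lemma canon_nodes_upd_mark G v f x m : WF G -> find_node G v = Some x -> NidPres f ->
  nmark_beq (nmk (f x)) m = nmark_beq (nmk x) m -> canon (upd_node G v f) (KNodes m) = canon G (KNodes m).
Proof. intros HW Hf Hp H. apply canon_nodes_upd_same; auto. intros y Hy Hid.
  rewrite (find_uniq G v x y HW Hf Hy Hid). auto. Qed.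

Lemma canon_roots_upd_pres G v f : NidPres f -> (forall y, nroot (f y) = nroot y) ->
  canon (upd_node G v f) KRoots = canon G KRoots.
Proof. intros Hp H. apply canon_roots_upd_same; auto. Qed.

Lemma canon_nodes_upd_pres G v f m : NidPres f -> (forall y, nmk (f y) = nmk y) ->
  canon (upd_node G v f) (KNodes m) = canon G (KNodes m).
Proof. intros Hp H. apply canon_nodes_upd_same; auto. intros y _ _. rewrite H. auto. Qed.

Lemma ncm_upd G v f x m : WF G -> find_node G v = Some x -> NidPres f ->
  ncm (upd_node G v f) m + (if nmark_beq (nmk x) m then 1 else 0) =
  ncm G m + (if nmark_beq (nmk (f x)) m then 1 else 0).
Proof. intros HW Hf Hp. unfold ncm. rewrite !canon_nodes_len.
  apply find_node_spec in Hf. destruct Hf as [H1 H2].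
  apply (ncnt_upd G v f (fun y => nmark_beq (nmk y) m) x Hp HW H1 H2). Qed.

Lemma canon_nodes_upd_in G v f m w : NidPres f ->
  In w (canon (upd_node G v f) (KNodes m)) -> w = v \/ In w (canon G (KNodes m)).
Proof. intros Hp H. apply in_canon_nodes in H. destruct H as [z [H1 [H2 H3]]].
  rewrite upd_node_nodes in H1. apply updl_in in H1. destruct H1 as [y [Hy E]].
  destruct (Nat.eqb_spec (nid y) v) as [E2|E2].
  - left. subst z. rewrite Hp in H2. congruence.
  - right. subst z. apply in_canon_nodes. eauto. Qed.

Lemma roots_on G v f x : WF G -> canon G KRoots = [] -> find_node G v = Some x -> NidPres f ->
  nroot (f x) = true -> canon (upd_node G v f) KRoots = [v].
Proof. intros HW Hr Hf Hp Hx. apply find_node_spec in Hf as Hf'. destruct Hf' as [Hin Hid].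
  apply len1_in.
  - rewrite canon_roots_len. pose proof (ncnt_upd G v f nroot x Hp HW Hin Hid) as H.
    pose proof (canon_roots_len G) as H2. rewrite Hr in H2. simpl in H2. rewrite <- H2 in H.
    destruct (nroot x), (nroot (f x)); simpl in H; lia.
  - apply in_canon_roots. exists (f x). split; [|split; auto].
    + rewrite upd_node_nodes. apply updl_in. exists x. rewrite Hid, Nat.eqb_refl. auto.
    + rewrite Hp; auto.
Qed.

Lemma roots_off G v f x : WF G -> canon G KRoots = [v] -> find_node G v = Some x -> NidPres f ->
  nroot (f x) = false -> canon (upd_node G v f) KRoots = [].
Proof. intros HW Hr Hf Hp Hx. apply find_node_spec in Hf as Hf'. destruct Hf' as [Hin Hid].
  assert (Hrx : nroot x = true).
  { assert (Hv : In v (canon G KRoots)) by (rewrite Hr; left; auto).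
    apply in_canon_roots in Hv. destruct Hv as [y [H1 [H2 H3]]].
    rewrite <- (find_uniq G v x y HW Hf H1 H2). auto. }
  pose proof (ncnt_upd G v f nroot x Hp HW Hin Hid) as H.
  pose proof (canon_roots_len G) as H2. rewrite Hr in H2. simpl in H2. rewrite <- H2 in H.
  rewrite Hrx, Hx in H. pose proof (canon_roots_len (upd_node G v f)) as H3.
  destruct (canon (upd_node G v f) KRoots); simpl in H3; auto. lia. Qed.

Lemma labg_pres G v f g : NidPres f -> (forall y, nlab (f y) = nlab y) ->
  labg (upd_node G v f) g = labg G g.
Proof. intros Hp H. unfold labg. rewrite find_node_upd by auto.
  destruct (find_node G g); simpl; auto. destruct (Nat.eqb (nid n) v); rewrite ?H; auto. Qed.
Lemma labg_other G v f g : NidPres f -> v <> g -> labg (upd_node G v f) g = labg G g.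
Proof. intros Hp H. unfold labg. rewrite find_node_upd_other; auto. Qed.
Lemma labg_same G g f x : NidPres f -> find_node G g = Some x -> labg (upd_node G g f) g = Some (nlab (f x)).
Proof. intros Hp H. unfold labg. rewrite (find_node_upd_same G g f x Hp H). auto. Qed.

Definition XR g lg G := labg G g = Some lg /\ B5 G g.
Definition MIDR := TryTE (Call [r_unvisited; r_reduce]) Skip Skip.

Lemma MIDR_spec o g lg v G t : valid_oracle o -> WF G -> canon G KRoots = [v] -> In v (canon G (KNodes NBlue)) ->
  List.length (canon G (KEdges v ERed OOut)) <= 1 -> XR g lg G ->
  Runs o MIDR t G (fun r t' => t' <= t + 80 /\ match r with None => True
        | Some G' => NSH G' = NSH G /\ gedges G' = gedges G /\ XR g lg G' end).
Proof.
  intros Ho HW Hr Hv Hl [HL HB]. destruct (canon_node_find G v NBlue HW Hv) as [x [Hf [Hb _]]].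
  assert (Good : forall ed l, In ed (gedges G) -> NSH (upd_node G (etgt ed) (set_lab l)) = NSH G /\
     gedges (upd_node G (etgt ed) (set_lab l)) = gedges G /\ XR g lg (upd_node G (etgt ed) (set_lab l))).
  { intros ed l Hin. split; [apply NSH_lab|]. split; [reflexivity|]. split.
    - rewrite labg_other; auto. intros y; reflexivity.
    - exact HB. }
  unfold MIDR. apply runs_try with (Q1 := fun r t1 => t1 <= t + 40 /\ match r with None => True
     | Some G' => exists ed l, In ed (gedges G) /\ G' = upd_node G (etgt ed) (set_lab l) end).
  - apply runs_call. simpl.
    destruct (unv_spec o t G v x Ho Hr Hf Hb Hl) as [[A1 B1] _].
    destruct (r_unvisited o t G) as [c1 [G1|]] eqn:E1; simpl in *.
    + split; [lia|]. destruct B1 as [B1|B1]; [discriminate|]. destruct B1 as [ed [l [H1 H2]]].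
      inversion H2. eauto.
    + destruct (unv_spec o (t + c1) G v x Ho Hr Hf Hb Hl) as [_ [A2 B2]].
      destruct (r_reduce o (t + c1) G) as [c2 [G2|]] eqn:E2; simpl in *.
      * split; [lia|]. destruct B2 as [B2|B2]; [discriminate|]. destruct B2 as [ed [l [H1 H2]]].
        inversion H2. eauto.
      * split; [lia|auto].
  - intros G1 t1 [Ht [ed [l [Hin ->]]]]. apply runs_skip. split; [lia|]. apply Good; auto.
  - intros t1 [Ht _]. apply runs_skip. split; [lia|]. split; auto. split; auto. split; auto.
Qed.


Definition RSt g lg B NE NN G := WF G /\ canon G (KNodes NGreen) = [g] /\ labg G g = Some lg /\ B5 G g /\
  canon G KRoots = [] /\ ecm G ERed = 0 /\ Pm G NGrey /\ ncm G NBlue + ncm G NGrey <= B /\ List.length (gedges G) = NE /\ List.length (gnodes G) = NN.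
Lemma ES_len G G' : ES G = ES G' -> List.length (gedges G) = List.length (gedges G').
Proof. intros H. unfold ES in H. rewrite <- (length_map (fun e => (eid e, esrc e, etgt e)) (gedges G)), H, length_map. auto. Qed.
Lemma RSt_intro g lg B NE NN G : WF G -> canon G (KNodes NGreen) = [g] -> labg G g = Some lg -> B5 G g ->
  canon G KRoots = [] -> ecm G ERed = 0 -> Pm G NGrey -> ncm G NBlue + ncm G NGrey <= B -> List.length (gedges G) = NE -> List.length (gnodes G) = NN -> RSt g lg B NE NN G.
Proof. unfold RSt. tauto. Qed.
Definition PhiR G := 230 * ncm G NBlue + 100 * ecm G EUn.

Lemma np_root b : NidPres (set_root b). Proof. intros y; reflexivity. Qed.
Lemma np_rm b m : NidPres (fun y => set_root b (set_mark m y)). Proof. intros y; reflexivity. Qed.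
Lemma np_mark m : NidPres (set_mark m). Proof. intros y; reflexivity. Qed.

Lemma XR_emark g lg G e m : XR g lg G -> XR g lg (upd_edge G e (set_emark m)).
Proof. intros [A B]. split; [exact A|]. apply (T5 G); auto. rewrite ES_emark. auto. Qed.

Lemma root1_eq o t G : r_root1 o t G = iter o t G (KNodes NBlue) (fun v => done (upd_node G v (set_root true))).
Proof. reflexivity. Qed.

Lemma relax_loop o g lg B NE NN : valid_oracle o -> forall G t, RSt g lg B NE NN G ->
  Runs o (Loop Relax) t G (fun r t' => exists G', r = Some G' /\ RSt g lg B NE NN G' /\
     canon G' (KNodes NBlue) = [] /\ t' + PhiR G' <= t + PhiR G + 2).
Proof.
  intros Ho G0 t0 H0. eapply runs_mono.
  - apply (runs_loop o Relax (RSt g lg B NE NN) PhiR (fun G => canon G (KNodes NBlue) = []) 1); [|exact H0].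
    clear G0 t0 H0. intros G t [HW [Hg [HL [HB [Hr [Hred [HPg [HBnd [HEl HNl]]]]]]]]].
    unfold Relax.
    apply runs_seq with (Q1 := fun r t1 => (r = None /\ t1 = t + 1 /\ canon G (KNodes NBlue) = []) \/
       (exists v, In v (canon G (KNodes NBlue)) /\ r = Some (upd_node G v (set_root true)) /\ t1 = t + 2)).
    { apply runs_R. rewrite root1_eq.
      destruct (root_rule_spec o t G NBlue (set_root true) Ho) as [[E1 E2]|[v [Hv E2]]]; rewrite E2; simpl.
      - left. auto.
      - right. eauto. }
    2:{ intros t1 [[_ [Ht E]]|[v [_ [E _]]]]; [|discriminate]. split; [lia|auto]. }
    intros G1' t1 [[E _]|[v [Hv [E Ht1]]]]; [discriminate|]. injection E as E; subst G1'.
    destruct (canon_node_find G v NBlue HW Hv) as [x [Hf [Hb Hin]]].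
    set (G1 := upd_node G v (set_root true)).
    assert (HW1 : WF G1) by (apply WF_upd_node; auto; apply np_root).
    assert (Hr1 : canon G1 KRoots = [v]) by (apply (roots_on G v _ x); auto; apply np_root).
    assert (Hf1 : find_node G1 v = Some (set_root true x)) by (apply find_node_upd_same; auto; apply np_root).
    assert (Hc1 : forall m, canon G1 (KNodes m) = canon G (KNodes m)) by
      (intros m; apply canon_nodes_upd_pres; [apply np_root|reflexivity]).
    assert (HL1 : labg G1 g = Some lg) by (unfold G1; rewrite labg_pres; [auto|apply np_root|intros yy; reflexivity]).
    apply runs_try with (Q1 := fun r t2 => t2 <= t1 + 6 /\ r = if Nat.eqb (degree G1 v) 0 then
        Some (upd_node G1 v (fun y => set_root false (set_mark NUn y))) else None).
    { apply runs_R. destruct (no_deg_spec o t1 G1 v (set_root true x) Ho Hr1 Hf1 Hb) as [A Bq].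
      split; [lia|exact Bq]. }
    + intros G2' t2 [Ht2 E]. destruct (Nat.eqb_spec (degree G1 v) 0) as [Hd|Hd]; [|discriminate].
      injection E as E; subst G2'. apply runs_skip.
      set (f2 := fun y => set_root false (set_mark NUn y)).
      set (G2 := upd_node G1 v f2).
      assert (Hc2 : forall m, m <> NUn -> m <> NBlue -> canon G2 (KNodes m) = canon G1 (KNodes m)).
      { intros m H1 H2. apply (canon_nodes_upd_mark G1 v f2 (set_root true x)); auto; [apply np_rm|].
        simpl. rewrite Hb. destruct m; simpl; congruence. }
      pose proof (ncm_upd G1 v f2 (set_root true x) NBlue HW1 Hf1 (np_rm false NUn)) as Hn1.
      simpl in Hn1. rewrite Hb in Hn1. simpl in Hn1.
      assert (Hg2 : ncm G2 NGrey = ncm G NGrey) by (unfold ncm; rewrite Hc2, Hc1 by discriminate; auto).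
      assert (Hb2 : ncm G1 NBlue = ncm G NBlue) by (unfold ncm; rewrite Hc1; auto).
      change (RSt g lg B NE NN G2 /\ t2 + PhiR G2 + 1 <= t + PhiR G). 
      split; [apply RSt_intro|].
      * apply WF_upd_node; auto. apply np_rm.
      * rewrite Hc2, Hc1 by discriminate. auto.
      * unfold G2. rewrite labg_pres; [auto|apply np_rm|intros yy; reflexivity].
      * exact HB.
      * apply (roots_off G1 v f2 (set_root true x)); auto. apply np_rm.
      * exact Hred.
      * intros w Hw. unfold G2 in Hw. rewrite Hc2, Hc1 in Hw by discriminate. apply HPg. auto.
      * fold G2 in Hn1. lia.
      * exact HEl.
      * unfold G2. rewrite len_upd_node. unfold G1. rewrite len_upd_node. exact HNl.
      * unfold PhiR. fold G2 in Hn1. change (ecm G2 EUn) with (ecm G EUn). nia.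
    + intros t2 [Ht2 E]. destruct (Nat.eqb_spec (degree G1 v) 0) as [Hd|Hd]; [discriminate|].
      apply runs_seq with (Q1 := fun r t' => exists G', r = Some G' /\ NSH G' = NSH G1 /\ ES G' = ES G1 /\
          ecm G' ERed = 0 /\ XR g lg G' /\
          t' + (80 + 20) * ecm G' EUn <= (t2 + (t2 - t1)) + (80 + 20) * ecm G1 EUn + 2 * (80 + 20)).
      * apply (inner_loop o MIDR 80 (XR g lg) v Ho (XR_emark g lg)).
        -- intros Gx tx A1 A2 A3 A4 A5. apply (MIDR_spec o g lg v); auto.
        -- exact HW1.
        -- exact Hr1.
        -- rewrite Hc1. auto.
        -- exact Hred.
        -- split; auto.
      * intros G' t3 [G'' [EE [HN' [HE' [Hred' [[HL' HB'] Ht3]]]]]]. injection EE as EE; subst G'.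
        assert (HW' : WF G'') by (apply (T4 G1); auto).
        assert (Hr' : canon G'' KRoots = [v]) by (rewrite (T2 G'' G1); auto).
        assert (Hc' : forall m, canon G'' (KNodes m) = canon G (KNodes m)) by (intros m; rewrite (T1 G'' G1), Hc1; auto).
        assert (Hv' : In v (canon G'' (KNodes NBlue))) by (rewrite Hc'; auto).
        destruct (canon_node_find G'' v NBlue HW' Hv') as [x' [Hf' [Hb' Hin']]].
        apply runs_R. destruct (unroot1_spec o t3 G'' v x' Ho Hr' Hf' Hb') as [A Bq]. rewrite Bq.
        set (f3 := fun y => set_root false (set_mark NGrey y)).
        set (G3 := upd_node G'' v f3).
        assert (Hc3 : forall m, m <> NGrey -> m <> NBlue -> canon G3 (KNodes m) = canon G'' (KNodes m)).
        { intros m H1 H2. apply (canon_nodes_upd_mark G'' v f3 x'); auto; [apply np_rm|].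
          simpl. rewrite Hb'. destruct m; simpl; congruence. }
        pose proof (ncm_upd G'' v f3 x' NBlue HW' Hf' (np_rm false NGrey)) as Hn1.
        pose proof (ncm_upd G'' v f3 x' NGrey HW' Hf' (np_rm false NGrey)) as Hn2.
        simpl in Hn1, Hn2. rewrite Hb' in Hn1, Hn2. simpl in Hn1, Hn2. fold G3 in Hn1, Hn2.
        assert (Hd' : forall w, degree G3 w = degree G w) by (intros w; apply (T3 G'' G1); auto).
        assert (Hm' : forall m, ncm G'' m = ncm G m) by (intros m; unfold ncm; rewrite Hc'; auto).
        assert (HU' : ecm G3 EUn = ecm G'' EUn) by reflexivity.
        assert (HU1 : ecm G1 EUn = ecm G EUn) by reflexivity.
        cbv beta iota.
        change (RSt g lg B NE NN G3 /\ t3 + fst (r_unroot1 o t3 G'') + PhiR G3 + 1 <= t + PhiR G). 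
        split; [apply RSt_intro|].
        -- apply WF_upd_node; auto. apply np_rm.
        -- rewrite Hc3, Hc' by discriminate. auto.
        -- unfold G3. rewrite labg_pres; [auto|apply np_rm|intros yy; reflexivity].
        -- exact HB'.
        -- apply (roots_off G'' v f3 x'); auto. apply np_rm.
        -- exact Hred'.
        -- intros w Hw. rewrite Hd'. apply canon_nodes_upd_in in Hw; [|apply np_rm].
           destruct Hw as [->|Hw].
           ++ change (degree G1 v <> 0) in Hd. auto.
           ++ rewrite Hc' in Hw. auto.
        -- rewrite !Hm' in *. lia.
        -- change (List.length (gedges G'') = NE). rewrite (ES_len G'' G1); auto.
        -- unfold G3. rewrite len_upd_node, (NSH_len G'' G1) by auto. unfold G1. rewrite len_upd_node. exact HNl.
        -- unfold PhiR. rewrite Hm' in Hn1. rewrite HU', <- HU1. nia.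
      * intros t3 [G'' [EE _]]. discriminate.
  - intros r t' [G' [-> [A [Bq C]]]]. exists G'. split; [auto|]. split; [auto|]. split; [auto|lia].
Qed.


Definition CSt g lg NE NN G := WF G /\ canon G (KNodes NGreen) = [g] /\ labg G g = Some lg /\ B5 G g /\
  canon G KRoots = [] /\ ecm G ERed = 0 /\ Pm G NGrey /\ Pm G NBlue /\ List.length (gedges G) = NE /\ List.length (gnodes G) = NN.
Lemma CSt_intro g lg NE NN G : WF G -> canon G (KNodes NGreen) = [g] -> labg G g = Some lg -> B5 G g ->
  canon G KRoots = [] -> ecm G ERed = 0 -> Pm G NGrey -> Pm G NBlue -> List.length (gedges G) = NE -> List.length (gnodes G) = NN -> CSt g lg NE NN G.
Proof. unfold CSt. tauto. Qed.
Definition PhiC G := 30 * ncm G NGrey + 9 * ecm G EBlue.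

Lemma gnodes_NSH G G' : gnodes G = gnodes G' -> NSH G = NSH G'.
Proof. intros H. unfold NSH. rewrite H. auto. Qed.
Lemma gnodes_labg G G' g : gnodes G = gnodes G' -> labg G g = labg G' g.
Proof. intros H. unfold labg, find_node. rewrite H. auto. Qed.

Lemma clean_inner o g v : valid_oracle o -> forall G1 t, WF G1 -> canon G1 KRoots = [v] ->
  In v (canon G1 (KNodes NBlue)) -> ecm G1 ERed = 0 -> B5 G1 g ->
  Runs o (Loop (R r_unmark_edge)) t G1 (fun r t' => exists G', r = Some G' /\ gnodes G' = gnodes G1 /\
     ES G' = ES G1 /\ ecm G' ERed = 0 /\ B5 G' g /\ t' + 9 * ecm G' EBlue <= t + 9 * ecm G1 EBlue + 16).
Proof.
  intros Ho G1 t0 HW1 Hr1 Hv1 Hred1 HB1.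
  set (Inv := fun G => gnodes G = gnodes G1 /\ ES G = ES G1 /\ ecm G ERed = 0 /\ B5 G g).
  eapply runs_mono.
  - apply (runs_loop o _ Inv (fun G => 9 * ecm G EBlue) (fun _ => True) 8); [|repeat split; auto].
    intros G t [Hn [HE [Hred HB]]].
    assert (HW : WF G) by (apply (T4 G1); auto; apply gnodes_NSH; auto).
    assert (Hr : canon G KRoots = [v]) by (rewrite (T2 G G1); auto; apply gnodes_NSH; auto).
    assert (Hv : In v (canon G (KNodes NBlue))) by (rewrite (T1 G G1); auto; apply gnodes_NSH; auto).
    apply runs_R. rewrite unmark_edge_eq.
    destruct (edge_rule_full o t G v EBlue EUn Ho HW Hr Hv) as [A Bq].
    destruct (snd (blue_root o t G (fun v _ => edge_step o t G v EBlue EUn))) as [G2|] eqn:E2.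
    + destruct (Bq G2 eq_refl) as [ed [Hin [Hm [Hs [Ht ->]]]]]. split.
      * split; [exact Hn|]. split; [rewrite ES_emark; auto|]. split.
        -- pose proof (ecm_upd_emark G ed EBlue EUn ERed HW Hin Hm) as HH. cbn [emark_beq] in HH. lia.
        -- apply (T5 G); auto. rewrite ES_emark; auto.
      * pose proof (ecm_upd_emark G ed EBlue EUn EBlue HW Hin Hm) as HH. cbn [emark_beq] in HH. lia.
    + split; auto. lia.
  - intros r t' [G' [-> [[A [Bq [C D]]] [_ E]]]]. exists G'. repeat split; auto.
Qed.

Lemma root2_eq o t G : r_root2 o t G = iter o t G (KNodes NGrey)
  (fun v => done (upd_node G v (fun y => set_root true (set_mark NBlue y)))).
Proof. reflexivity. Qed.

Lemma clean_loop o g lg NE NN : valid_oracle o -> forall G t, CSt g lg NE NN G ->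
  Runs o (Loop Clean) t G (fun r t' => exists G', r = Some G' /\ CSt g lg NE NN G' /\
     t' + PhiC G' <= t + PhiC G + 2).
Proof.
  intros Ho G0 t0 H0. eapply runs_mono.
  - apply (runs_loop o Clean (CSt g lg NE NN) PhiC (fun _ => True) 1); [|exact H0].
    clear G0 t0 H0. intros G t [HW [Hg [HL [HB [Hr [Hred [HPg [HPb [HEl HNl]]]]]]]]].
    unfold Clean.
    set (f1 := fun y => set_root true (set_mark NBlue y)).
    apply runs_seq with (Q1 := fun r t1 => (r = None /\ t1 = t + 1) \/
       (exists v, In v (canon G (KNodes NGrey)) /\ r = Some (upd_node G v f1) /\ t1 = t + 2)).
    { apply runs_R. change (r_root2 o t G) with (iter o t G (KNodes NGrey) (fun v => done (upd_node G v f1))).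
      destruct (root_rule_spec o t G NGrey f1 Ho) as [[E1 E2]|[v [Hv E2]]]; rewrite E2; simpl.
      - left. auto.
      - right. eauto. }
    2:{ intros t1 [[_ Ht]|[v [_ [E _]]]]; [|discriminate]. split; [lia|auto]. }
    intros G1' t1 [[E _]|[v [Hv [E Ht1]]]]; [discriminate|]. injection E as E; subst G1'.
    destruct (canon_node_find G v NGrey HW Hv) as [x [Hf [Hgx Hin]]].
    set (G1 := upd_node G v f1).
    assert (HW1 : WF G1) by (apply WF_upd_node; auto; apply np_rm).
    assert (Hr1 : canon G1 KRoots = [v]) by (apply (roots_on G v _ x); auto; apply np_rm).
    assert (Hf1 : find_node G1 v = Some (f1 x)) by (apply find_node_upd_same; auto; apply np_rm).
    assert (Hv1 : In v (canon G1 (KNodes NBlue))).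
    { apply in_canon_nodes. exists (f1 x). pose proof (find_node_spec _ _ _ Hf1) as [A1 A2].
      split; [auto|split; [auto|reflexivity]]. }
    assert (Hgr1 : canon G1 (KNodes NGreen) = [g]).
    { rewrite (canon_nodes_upd_mark G v f1 x); auto; [apply np_rm|]. simpl. rewrite Hgx. auto. }
    assert (HL1 : labg G1 g = Some lg) by (unfold G1; rewrite labg_pres; [auto|apply np_rm|intros yy; reflexivity]).
    assert (Hsub : forall m w, In w (canon G1 (KNodes m)) -> w = v \/ In w (canon G (KNodes m)))
      by (intros m w Hw; apply (canon_nodes_upd_in G v f1); auto; apply np_rm).
    pose proof (ncm_upd G v f1 x NGrey HW Hf (np_rm true NBlue)) as Hn1.
    simpl in Hn1. rewrite Hgx in Hn1. simpl in Hn1. fold G1 in Hn1.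
    apply runs_seq with (Q1 := fun r t' => exists G', r = Some G' /\ gnodes G' = gnodes G1 /\
     ES G' = ES G1 /\ ecm G' ERed = 0 /\ B5 G' g /\ t' + 9 * ecm G' EBlue <= t1 + 9 * ecm G1 EBlue + 16).
    + apply (clean_inner o g v Ho G1 t1 HW1 Hr1 Hv1 Hred HB).
    + intros G' t3 [G'' [EE [Hn' [HE' [Hred' [HB' Ht3]]]]]]. injection EE as EE; subst G'.
      assert (HN' : NSH G'' = NSH G1) by (apply gnodes_NSH; auto).
      assert (HW' : WF G'') by (apply (T4 G1); auto).
      assert (Hr' : canon G'' KRoots = [v]) by (rewrite (T2 G'' G1); auto).
      assert (Hc' : forall m, canon G'' (KNodes m) = canon G1 (KNodes m)) by (intros m; rewrite (T1 G'' G1); auto).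
      assert (Hv' : In v (canon G'' (KNodes NBlue))) by (rewrite Hc'; auto).
      destruct (canon_node_find G'' v NBlue HW' Hv') as [x' [Hf' [Hb' Hin']]].
      apply runs_R. destruct (unroot2_spec o t3 G'' v x' Ho Hr' Hf' Hb') as [A Bq]. rewrite Bq.
      set (G3 := upd_node G'' v (set_root false)).
      assert (Hc3 : forall m, canon G3 (KNodes m) = canon G1 (KNodes m))
        by (intros m; unfold G3; rewrite canon_nodes_upd_pres; [auto|apply np_root|reflexivity]).
      assert (Hd3 : forall w, degree G3 w = degree G w) by (intros w; apply (T3 G'' G1); auto).
      cbv beta iota.
      change (CSt g lg NE NN G3 /\ t3 + fst (r_unroot2 o t3 G'') + PhiC G3 + 1 <= t + PhiC G).
      split; [apply CSt_intro|].
      * apply WF_upd_node; auto. apply np_root.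
      * rewrite Hc3. auto.
      * unfold G3. rewrite labg_pres; [|apply np_root|intros yy; reflexivity].
        rewrite (gnodes_labg G'' G1); auto.
      * exact HB'.
      * apply (roots_off G'' v _ x'); auto. apply np_root.
      * exact Hred'.
      * intros w Hw. rewrite Hd3. rewrite Hc3 in Hw. apply Hsub in Hw. destruct Hw as [->|Hw]; auto.
      * intros w Hw. rewrite Hd3. rewrite Hc3 in Hw. apply Hsub in Hw. destruct Hw as [->|Hw]; auto.
      * change (List.length (gedges G'') = NE). rewrite (ES_len G'' G1); auto.
      * unfold G3. rewrite len_upd_node, (NSH_len G'' G1) by auto. unfold G1. rewrite len_upd_node. exact HNl.
      * unfold PhiC. assert (ncm G3 NGrey = ncm G1 NGrey) by (unfold ncm; rewrite Hc3; auto).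
        change (ecm G3 EBlue) with (ecm G'' EBlue).
        assert (ecm G1 EBlue = ecm G EBlue) by reflexivity. lia.
    + intros t3 [G'' [EE _]]. discriminate.
  - intros r t' [G' [-> [A [_ C]]]]. exists G'. split; [auto|]. split; [auto|lia].
Qed.


Lemma filter_or_len {A} (P Q : A -> bool) l : (forall x, P x = true -> Q x = false) ->
  List.length (filter (fun x => P x || Q x) l) = List.length (filter P l) + List.length (filter Q l).
Proof. intros H. induction l as [|y l IH]; simpl; auto.
  destruct (P y) eqn:E1; [rewrite (H y E1)|]; destruct (Q y); simpl; lia. Qed.

Lemma count_bound G : WF G -> Pm G NGrey -> Pm G NBlue ->
  ncm G NBlue + ncm G NGrey <= 2 * List.length (gedges G).
Proof.
  intros HW HPg HPb. unfold ncm. rewrite !canon_nodes_len. unfold ncnt.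
  rewrite <- filter_or_len.
  2:{ intros x H. apply nmark_beq_eq in H. rewrite H. reflexivity. }
  set (P := fun x => nmark_beq (nmk x) NBlue || nmark_beq (nmk x) NGrey).
  rewrite <- (length_map nid).
  replace (2 * List.length (gedges G)) with (List.length (map esrc (gedges G) ++ map etgt (gedges G)))
    by (rewrite length_app, !length_map; lia).
  apply NoDup_incl_length.
  - apply nodup_map_filter. apply HW.
  - intros w Hw. apply in_map_filter in Hw. destruct Hw as [x [Hx [Hid HP]]].
    assert (Hd : degree G w <> 0).
    { unfold P in HP. apply orb_true_iff in HP. destruct HP as [HP|HP].
      - apply HPb. apply in_canon_nodes. exists x. split; auto. split; auto. apply nmark_beq_eq; auto.
      - apply HPg. apply in_canon_nodes. exists x. split; auto. split; auto. apply nmark_beq_eq; auto. }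
    unfold degree in Hd. destruct (filter _ (gedges G)) as [|e l] eqn:Ef; [simpl in Hd; lia|].
    assert (He : In e (filter (fun e => Nat.eqb (esrc e) w || Nat.eqb (etgt e) w) (gedges G))) by (rewrite Ef; left; auto).
    apply filter_In in He. destruct He as [He1 He2]. apply orb_true_iff in He2.
    apply in_or_app. destruct He2 as [H|H]; apply Nat.eqb_eq in H; [left|right]; rewrite <- H; apply in_map; auto.
Qed.

Definition MSt g (k : nat) NE NN G := WF G /\ canon G (KNodes NGreen) = [g] /\ labg G g = Some [AInt (Z.of_nat k)] /\
  B5 G g /\ canon G KRoots = [] /\ ecm G ERed = 0 /\ Pm G NGrey /\ List.length (gedges G) = NE /\ List.length (gnodes G) = NN.

Definition mainbody := Seq (R r_decrement) (Seq (Loop Relax) (Loop Clean)).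

Lemma ecm_le G m : ecm G m <= List.length (gedges G).
Proof. unfold ecm, ecnt. apply filter_length_le. Qed.
Lemma ncm_le G m : ncm G m <= List.length (gnodes G).
Proof. unfold ncm. rewrite canon_nodes_len. unfold ncnt. apply filter_length_le. Qed.

Lemma labg_find G g l : labg G g = Some l -> exists x, find_node G g = Some x /\ nlab x = l.
Proof. unfold labg. destruct (find_node G g) as [x|]; simpl; intros H; inversion H; eauto. Qed.

Lemma main_loop o g NE NN : valid_oracle o -> forall k G t B, MSt g k NE NN G -> ncm G NBlue + ncm G NGrey <= B ->
  Runs o (Loop mainbody) t G (fun r t' => exists G', r = Some G' /\ MSt g 0 NE NN G' /\
     t' <= t + 260 * B + 109 * NE + 22 + k * (629 * NE + 10)).
Proof.
  intros Ho k. induction k as [|k IH]; intros G t B HM HB0;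
    destruct HM as [HW [Hg [HL [HB [Hr [Hred [HPg [HE HNn]]]]]]]];
    destruct (labg_find G g _ HL) as [xg [Hfg Hlg]].
  - apply runs_loop_step with (Q1 := fun r t1 => r = None /\ t1 <= t + 6).
    + unfold mainbody. apply runs_seq with (Q1 := fun r t1 => t1 <= t + 6 /\ r = None).
      * apply runs_R. destruct (decrement_spec o t G g xg 0 Ho Hg Hfg Hlg) as [A Bq]. simpl in Bq.
        split; [lia|auto].
      * intros G1 t1 [_ E]. discriminate.
      * intros t1 [A _]. auto.
    + intros G1 t1 [E _]. discriminate.
    + intros t1 [_ Ht1]. exists G. split; auto. split; [unfold MSt; tauto|lia].
  - apply runs_loop_step with (Q1 := fun r t1 => exists G2, r = Some G2 /\ MSt g k NE NN G2 /\
        ncm G2 NBlue + ncm G2 NGrey <= 2 * NE /\ t1 <= t + 260 * B + 109 * NE + 10).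
    + unfold mainbody.
      set (G1 := upd_node G g (set_lab [AInt (Z.of_nat (S k) - 1)])).
      apply runs_seq with (Q1 := fun r t1 => t1 <= t + 6 /\ r = Some G1).
      * apply runs_R. destruct (decrement_spec o t G g xg (Z.of_nat (S k)) Ho Hg Hfg Hlg) as [A Bq].
        replace (Z.ltb 0 (Z.of_nat (S k))) with true in Bq by (symmetry; apply Z.ltb_lt; lia).
        split; [lia|auto].
      * intros G1' t1 [Ht1 E]. injection E as E. subst G1'.
      assert (HN1 : NSH G1 = NSH G) by apply NSH_lab.
      assert (HL1 : labg G1 g = Some [AInt (Z.of_nat k)]).
      { unfold G1. rewrite (labg_same G g _ xg); auto; [|intros yy; reflexivity].
        cbn [nlab set_lab]. replace (Z.of_nat (S k) - 1)%Z with (Z.of_nat k) by lia. reflexivity. }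
      assert (HR1 : RSt g [AInt (Z.of_nat k)] B NE NN G1).
      { apply RSt_intro.
        - apply WF_upd_node; auto. intros yy; reflexivity.
        - rewrite (T1 G1 G); auto.
        - exact HL1.
        - exact HB.
        - rewrite (T2 G1 G); auto.
        - exact Hred.
        - apply (T6 G); auto.
        - unfold ncm. rewrite !(T1 G1 G); auto.
        - exact HE.
        - unfold G1. rewrite len_upd_node. exact HNn. }
      apply runs_seq with (Q1 := fun r t' => exists G', r = Some G' /\ RSt g [AInt (Z.of_nat k)] B NE NN G' /\
          canon G' (KNodes NBlue) = [] /\ t' + PhiR G' <= t1 + PhiR G1 + 2).
      -- apply relax_loop; auto.
      -- intros GR' tR [GR [EE [HRR [Hnb HtR]]]]. injection EE as EE. subst GR'.
        destruct HRR as [HW2 [Hg2 [HL2 [HB2 [Hr2 [Hred2 [HPg2 [HBnd2 [HE2 HN2]]]]]]]]].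
        assert (HC : CSt g [AInt (Z.of_nat k)] NE NN GR).
        { apply CSt_intro; auto. intros w Hw. rewrite Hnb in Hw. destruct Hw. }
        eapply runs_mono; [apply clean_loop; eauto|].
        intros r t' [GC [-> [HCC HtC]]]. exists GC. split; auto.
        destruct HCC as [HW3 [Hg3 [HL3 [HB3 [Hr3 [Hred3 [HPg3 [HPb3 [HE3 HN3]]]]]]]]].
        split; [unfold MSt; tauto|]. split.
        ++ rewrite <- HE3. apply count_bound; auto.
        ++ unfold PhiR, PhiC in *. pose proof (ecm_le G1 EUn). pose proof (ecm_le GR EBlue).
           change (List.length (gedges G1)) with (List.length (gedges G)) in *.
           assert (ncm G1 NBlue <= B) by (unfold RSt in HR1; lia).
           lia.
      -- intros t' [G' [EE _]]. discriminate.
      * intros t1 [_ E]; discriminate.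
    + intros G2 t2 [G2' [EE [HM2 [HB2 Ht2]]]]. injection EE as EE. subst G2'.
      eapply runs_mono; [apply (IH G2 t2 (2 * NE)); auto|].
      intros r t' [G' [-> [HM' Ht']]]. exists G'. split; auto. split; auto. nia.
    + intros t1 [G2 [EE _]]. discriminate.
Qed.


Definition MIDF := IfTE (R r_reduce) (R r_set_flag) Skip.
Definition XF g G := canon G (KNodes NGreen) = [g].

Lemma MIDF_spec o g v G t : valid_oracle o -> WF G -> canon G KRoots = [v] -> In v (canon G (KNodes NBlue)) ->
  List.length (canon G (KEdges v ERed OOut)) <= 1 -> XF g G ->
  Runs o MIDF t G (fun r t' => t' <= t + 50 /\ match r with None => True
        | Some G' => NSH G' = NSH G /\ gedges G' = gedges G /\ XF g G' end).
Proof.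
  intros Ho HW Hr Hv Hl HX. destruct (canon_node_find G v NBlue HW Hv) as [x [Hf [Hb _]]].
  destruct (unv_spec o t G v x Ho Hr Hf Hb Hl) as [_ [A1 _]].
  unfold MIDF. apply runs_if with (Q1 := fun r t1 => t1 <= t + 20).
  - apply runs_R. lia.
  - intros G1 t1 Ht1. apply runs_R.
    destruct (set_flag_spec o (t1 + (t1 - t)) G g Ho HX) as [A Bq].
    destruct Bq as [Bq|Bq]; rewrite Bq; (split; [lia|]); auto.
    split; [apply NSH_lab|]. split; [reflexivity|]. unfold XF. rewrite (T1 _ G); auto. apply NSH_lab.
  - intros t1 Ht1. apply runs_skip. split; [lia|]. auto.
Qed.

Definition FSt g NE NN G := WF G /\ canon G (KNodes NGreen) = [g] /\ canon G KRoots = [] /\ ecm G ERed = 0 /\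
  List.length (gedges G) = NE /\ List.length (gnodes G) = NN.
Lemma FSt_intro g NE NN G : WF G -> canon G (KNodes NGreen) = [g] -> canon G KRoots = [] -> ecm G ERed = 0 ->
  List.length (gedges G) = NE -> List.length (gnodes G) = NN -> FSt g NE NN G.
Proof. unfold FSt. tauto. Qed.
Definition PhiF G := 170 * ncm G NBlue + 70 * ecm G EUn.

Definition Fbody := Seq (R r_root1) (Seq (Loop (Seq (R r_unmarked_edge) (Seq MIDF (R r_finish)))) (R r_unroot1)).


Lemma final_loop o g NE NN : valid_oracle o -> forall G t, FSt g NE NN G ->
  Runs o (Loop Fbody) t G (fun r t' => exists G', r = Some G' /\ FSt g NE NN G' /\
     t' + PhiF G' <= t + PhiF G + 2).
Proof.
  intros Ho G0 t0 H0. eapply runs_mono.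
  - apply (runs_loop o Fbody (FSt g NE NN) PhiF (fun _ => True) 1); [|exact H0].
    clear G0 t0 H0. intros G t [HW [Hg [Hr [Hred [HE HN]]]]].
    unfold Fbody.
    apply runs_seq with (Q1 := fun r t1 => (r = None /\ t1 = t + 1) \/
       (exists v, In v (canon G (KNodes NBlue)) /\ r = Some (upd_node G v (set_root true)) /\ t1 = t + 2)).
    { apply runs_R. rewrite root1_eq.
      destruct (root_rule_spec o t G NBlue (set_root true) Ho) as [[E1 E2]|[v [Hv E2]]]; rewrite E2; simpl.
      - left. auto.
      - right. eauto. }
    2:{ intros t1 [[_ Ht]|[v [_ [E _]]]]; [|discriminate]. split; [lia|auto]. }
    intros G1' t1 [[E _]|[v [Hv [E Ht1]]]]; [discriminate|]. injection E as E; subst G1'.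
    destruct (canon_node_find G v NBlue HW Hv) as [x [Hf [Hb Hin]]].
    set (G1 := upd_node G v (set_root true)).
    assert (HW1 : WF G1) by (apply WF_upd_node; auto; apply np_root).
    assert (Hr1 : canon G1 KRoots = [v]) by (apply (roots_on G v _ x); auto; apply np_root).
    assert (Hc1 : forall m, canon G1 (KNodes m) = canon G (KNodes m)) by
      (intros m; apply canon_nodes_upd_pres; [apply np_root|reflexivity]).
    apply runs_seq with (Q1 := fun r t' => exists G', r = Some G' /\ NSH G' = NSH G1 /\ ES G' = ES G1 /\
          ecm G' ERed = 0 /\ XF g G' /\
          t' + (50 + 20) * ecm G' EUn <= t1 + (50 + 20) * ecm G1 EUn + 2 * (50 + 20)).
    + apply (inner_loop o MIDF 50 (XF g) v Ho).
      * intros Gx e m Hx. exact Hx.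
      * intros Gx tx A1 A2 A3 A4 A5. apply (MIDF_spec o g v); auto.
      * exact HW1.
      * exact Hr1.
      * rewrite Hc1. auto.
      * exact Hred.
      * unfold XF. rewrite Hc1. auto.
    + intros G' t3 [G'' [EE [HN' [HE' [Hred' [HX' Ht3]]]]]]. injection EE as EE; subst G'.
      assert (HW' : WF G'') by (apply (T4 G1); auto).
      assert (Hr' : canon G'' KRoots = [v]) by (rewrite (T2 G'' G1); auto).
      assert (Hc' : forall m, canon G'' (KNodes m) = canon G (KNodes m)) by (intros m; rewrite (T1 G'' G1), Hc1; auto).
      assert (Hv' : In v (canon G'' (KNodes NBlue))) by (rewrite Hc'; auto).
      destruct (canon_node_find G'' v NBlue HW' Hv') as [x' [Hf' [Hb' Hin']]].
      apply runs_R. destruct (unroot1_spec o t3 G'' v x' Ho Hr' Hf' Hb') as [A Bq]. rewrite Bq.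
      set (f3 := fun y => set_root false (set_mark NGrey y)).
      set (G3 := upd_node G'' v f3).
      assert (Hc3 : forall m, m <> NGrey -> m <> NBlue -> canon G3 (KNodes m) = canon G'' (KNodes m)).
      { intros m H1 H2. apply (canon_nodes_upd_mark G'' v f3 x'); auto; [apply np_rm|].
        simpl. rewrite Hb'. destruct m; simpl; congruence. }
      pose proof (ncm_upd G'' v f3 x' NBlue HW' Hf' (np_rm false NGrey)) as Hn1.
      simpl in Hn1. rewrite Hb' in Hn1. simpl in Hn1. fold G3 in Hn1.
      assert (Hm' : forall m, ncm G'' m = ncm G m) by (intros m; unfold ncm; rewrite Hc'; auto).
      assert (HU' : ecm G3 EUn = ecm G'' EUn) by reflexivity.
      assert (HU1 : ecm G1 EUn = ecm G EUn) by reflexivity.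
      cbv beta iota.
      change (FSt g NE NN G3 /\ t3 + fst (r_unroot1 o t3 G'') + PhiF G3 + 1 <= t + PhiF G).
      split; [apply FSt_intro|].
      * apply WF_upd_node; auto. apply np_rm.
      * rewrite Hc3, Hc' by discriminate. auto.
      * apply (roots_off G'' v f3 x'); auto. apply np_rm.
      * exact Hred'.
      * change (List.length (gedges G'') = NE). rewrite (ES_len G'' G1); auto.
      * unfold G3. rewrite upd_node_nodes. unfold updl. rewrite length_map. rewrite (NSH_len G'' G1); auto. unfold G1. rewrite upd_node_nodes. unfold updl. rewrite length_map. auto.
      * unfold PhiF. rewrite Hm' in Hn1. rewrite HU', <- HU1. nia.
    + intros t3 [G'' [EE _]]. discriminate.
  - intros r t' [G' [-> [A [_ C]]]]. exists G'. split; [auto|]. split; [auto|lia].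
Qed.

Lemma no_deg_inv_loop o : valid_oracle o -> forall G t, WF G ->
  Runs o (Loop (R r_no_deg_inv)) t G (fun r t' => t' <= t + 3 * List.length (gnodes G) + 2).
Proof.
  intros Ho G0 t0 H0. eapply runs_mono.
  - apply (runs_loop o _ WF (fun G => 3 * ncm G NUn) (fun _ => True) 1); [|exact H0].
    intros G t HW. apply runs_R.
    change (r_no_deg_inv o t G) with (iter o t G (KNodes NUn) (fun v => done (upd_node G v (set_mark NGrey)))).
    destruct (root_rule_spec o t G NUn (set_mark NGrey) Ho) as [[E1 E2]|[v [Hv E2]]]; rewrite E2; simpl.
    + split; [lia|auto].
    + destruct (canon_node_find G v NUn HW Hv) as [x [Hf [Hx _]]].
      pose proof (ncm_upd G v (set_mark NGrey) x NUn HW Hf (np_mark NGrey)) as H. rewrite Hx in H. simpl in H.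
      split; [apply WF_upd_node; auto; apply np_mark|]. lia.
  - intros r t' [G' [-> [_ [_ C]]]]. pose proof (ncm_le G0 NUn). lia.
Qed.


Lemma final_cost o g NE NN : valid_oracle o -> forall G t, FSt g NE NN G ->
  Runs o Final t G (fun r t' => t' <= t + 180 * NN + 80 * NE + 40).
Proof.
  intros Ho G t HF. unfold Final.
  apply runs_seq with (Q1 := fun r t' => exists G', r = Some G' /\ FSt g NE NN G' /\
     t' + PhiF G' <= t + PhiF G + 2).
  - apply (final_loop o g NE NN Ho); auto.
  - intros G1' t1 [G1 [EE [HF1 Ht1]]]. injection EE as EE; subst G1'.
    assert (HPhi : PhiF G <= 170 * NN + 70 * NE).
    { destruct HF as [_ [_ [_ [_ [HE HN]]]]]. unfold PhiF.
      pose proof (ncm_le G NBlue). pose proof (ecm_le G EUn). lia. }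
    destruct HF1 as [HW1 [Hg1 [Hr1 [Hred1 [HE1 HN1]]]]].
    apply runs_seq with (Q1 := fun r t2 => t2 <= t1 + 15 /\ (r = None \/ r = Some G1)).
    + apply runs_if with (Q1 := fun r t2 => t2 <= t1 + 7).
      * apply runs_R. pose proof (flag_spec o t1 G1 g Ho Hg1). lia.
      * intros G2 t2 Ht2. apply runs_fail. split; [lia|auto].
      * intros t2 Ht2. apply runs_skip. split; [lia|auto].
    + intros G2 t2 [Ht2 [E|E]]; [discriminate|]. injection E as E; subst G2.
      apply runs_seq with (Q1 := fun r t3 => t3 <= t2 + 3 + 5 * NE /\
          forall G3, r = Some G3 -> WF G3 /\ List.length (gnodes G3) <= NN).
      * apply runs_R. destruct (delete_counter_spec o t2 G1 g Ho HW1 Hg1) as [A Bq].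
        split; [lia|]. intros G3 E3. rewrite <- HN1. apply Bq. auto.
      * intros G3 t3 [Ht3 H3]. destruct (H3 G3 eq_refl) as [HW3 HN3].
        eapply runs_mono; [apply no_deg_inv_loop; auto|]. intros r t' Ht'. cbv beta in Ht'. lia.
      * intros t3 [Ht3 _]. lia.
    + intros t2 [Ht2 _]. lia.
  - intros t1 [G' [EE _]]. discriminate.
Qed.

Lemma fold_max_gt l y : In y l -> y < S (fold_right Nat.max 0 l).
Proof. induction l as [|a l IH]; simpl; [tauto|]. intros [->|H]; [lia|]. specialize (IH H). lia. Qed.
Lemma fresh_notin l : ~ In (S (fold_right Nat.max 0 l)) l.
Proof. intros H. apply fold_max_gt in H. lia. Qed.

Lemma NoDup_snoc {A} (l : list A) a : NoDup l -> ~ In a l -> NoDup (l ++ [a]).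
Proof. intros H1 H2. apply Permutation_NoDup with (a :: l).
  - apply Permutation_cons_append.
  - constructor; auto. Qed.

Lemma filter_nil_all {A} (P : A -> bool) l : (forall y, In y l -> P y = false) -> filter P l = [].
Proof. induction l as [|a l IH]; simpl; intros H; auto. rewrite (H a (or_introl eq_refl)). apply IH. auto. Qed.

Lemma find_app_none {A} (p : A -> bool) l1 l2 : (forall y, In y l1 -> p y = false) -> find p (l1 ++ l2) = find p l2.
Proof. induction l1 as [|a l IH]; simpl; intros H; auto. rewrite (H a (or_introl eq_refl)). apply IH. auto. Qed.

Definition fbc (y : node) := mkNode (nid y) (nlab y ++ [AInt 0%Z]) NBlue false.

Lemma set_counter_spec o t G : valid_oracle o -> input_ok G ->
  fst (r_set_counter o t G) <= 5 /\ exists S0 g, snd (r_set_counter o t G) = Some S0 /\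
  WF S0 /\ canon S0 (KNodes NGreen) = [g] /\ labg S0 g = Some [AInt 0%Z] /\ B5 S0 g /\
  canon S0 KRoots = [] /\ ecm S0 ERed = 0 /\ List.length (gedges S0) = num_edges G + 1 /\
  List.length (gnodes S0) = num_nodes G + 1.
Proof.
  intros Ho [ND1 [ND2 [Hend [Hgrey [Hroot Hedges]]]]].
  assert (HW : WF G) by (split; auto).
  pose proof (canon_roots_len G) as Hl. unfold ncnt in Hl. rewrite Hroot in Hl.
  destruct (canon G KRoots) as [|r [|r' l]] eqn:Er; simpl in Hl; try lia. clear Hl.
  assert (Hrin : In r (canon G KRoots)) by (rewrite Er; left; auto).
  apply in_canon_roots in Hrin. destruct Hrin as [x [Hin [Hid Hxr]]].
  assert (Hf : find_node G r = Some x) by (subst r; apply find_node_of; auto).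
  assert (Hxg : nmk x = NGrey) by auto.
  unfold r_set_counter.
  match goal with |- context [iter o t G KRoots ?F] =>
    destruct (iter_single o t G KRoots F r Ho Er) as [A B] end.
  cbv beta in A, B. rewrite Hf, gopt_S in A, B. cbv beta in A, B. rewrite Hxg in A, B.
  simpl nmark_beq in A, B. rewrite guard_T in A, B. cbv zeta in A, B. cbn [fst snd done] in A, B.
  split; [lia|].
  set (G1 := upd_node G r (fun y => mkNode (nid y) (nlab y ++ [AInt 0%Z]) NBlue false)) in *.
  set (g := fresh_nid G1) in *.
  set (gn := mkNode g [AInt 0%Z] NGreen false) in *.
  set (G2 := add_node G1 gn) in *.
  set (de := mkEdge (fresh_eid G2) g r [] EDashed) in *.
  exists (add_edge G2 de), g. split; [exact B|].
  assert (HG1n : map nid (gnodes G1) = map nid (gnodes G)) by (unfold G1; rewrite upd_node_nodes, updl_ids; auto).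
  assert (Hgn : ~ In g (map nid (gnodes G1))) by apply fresh_notin.
  assert (Hgn' : ~ In g (map nid (gnodes G))) by (rewrite <- HG1n; auto).
  assert (Hde : ~ In (fresh_eid G2) (map eid (gedges G2))) by apply fresh_notin.
  assert (HN1 : forall y, In y (gnodes G1) -> nmk y = NBlue \/ nmk y = NGrey).
  { intros y Hy. unfold G1 in Hy. rewrite upd_node_nodes in Hy. apply updl_in in Hy.
    destruct Hy as [z [Hz ->]]. destruct (Nat.eqb (nid z) r); [left; reflexivity|right; auto]. }
  assert (Hnid1 : forall y, In y (gnodes G1) -> nid y <> g).
  { intros y Hy E. apply Hgn. rewrite <- E. apply in_map. auto. }
  assert (Hroot1 : filter nroot (gnodes G1) = []).
  { pose proof (updl_count nid r (fun y => mkNode (nid y) (nlab y ++ [AInt 0%Z]) NBlue false) nroot (gnodes G) x ND1 Hin Hid) as H.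
    rewrite Hxr in H. simpl in H. rewrite Hroot in H.
    change (updl nid r _ (gnodes G)) with (gnodes G1) in H.
    destruct (filter nroot (gnodes G1)); simpl in H; auto; lia. }
  set (S0 := add_edge G2 de).
  assert (HSN : gnodes S0 = gnodes G1 ++ [gn]) by reflexivity.
  assert (HSE : gedges S0 = gedges G ++ [de]) by reflexivity.
  split; [|split; [|split; [|split; [|split; [|split; [|split]]]]]].
  - split; [rewrite HSN|rewrite HSE].
    + rewrite map_app. apply NoDup_snoc; [rewrite HG1n; auto|auto].
    + rewrite map_app. apply NoDup_snoc; auto.
  - unfold canon. rewrite HSN, filter_app, filter_nil_all.
    + reflexivity.
    + intros y Hy. destruct (HN1 y Hy) as [E|E]; rewrite E; reflexivity.
  - unfold labg, find_node. rewrite HSN, find_app_none.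
    + simpl. rewrite Nat.eqb_refl. reflexivity.
    + intros y Hy. apply Nat.eqb_neq. apply Hnid1. auto.
  - intros e He. rewrite HSE in He. apply in_app_or in He. destruct He as [He|[<-|[]]].
    + destruct (Hend e He) as [_ Ht]. intros E. apply Hgn'. rewrite <- E. auto.
    + simpl. intros E. apply Hgn'. rewrite <- E. subst r. apply in_map. auto.
  - unfold canon. rewrite HSN, filter_app, Hroot1. reflexivity.
  - unfold ecm, ecnt. rewrite HSE, filter_app, filter_nil_all.
    + reflexivity.
    + intros y Hy. destruct (Hedges y Hy) as [E _]. rewrite E. reflexivity.
  - rewrite HSE, length_app. reflexivity.
  - rewrite HSN, length_app. unfold G1. rewrite upd_node_nodes. unfold updl. rewrite length_map. reflexivity.
Qed.


Definition CntI g NE NN N0 G := WF G /\ canon G (KNodes NGreen) = [g] /\ B5 G g /\ canon G KRoots = [] /\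
  ecm G ERed = 0 /\ List.length (gedges G) = NE /\ List.length (gnodes G) = NN /\
  exists j, labg G g = Some [AInt (Z.of_nat j)] /\ j + ncm G NGrey = N0.

Lemma count_loop o g NE NN N0 : valid_oracle o -> forall G t, CntI g NE NN N0 G ->
  Runs o (Loop (R r_count)) t G (fun r t' => exists G', r = Some G' /\ CntI g NE NN N0 G' /\
     canon G' (KNodes NGrey) = [] /\ t' + 9 * ncm G' NGrey <= t + 9 * ncm G NGrey + 2).
Proof.
  intros Ho G0 t0 H0. eapply runs_mono.
  - apply (runs_loop o _ (CntI g NE NN N0) (fun G => 9 * ncm G NGrey) (fun G => canon G (KNodes NGrey) = []) 1); [|exact H0].
    clear G0 t0 H0. intros G t [HW [Hg [HB [Hr [Hred [HE [HN [j [HL Hj]]]]]]]]].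
    destruct (labg_find G g _ HL) as [xg [Hfg Hlg]].
    apply runs_R.
    destruct (count_spec o t G g xg (Z.of_nat j) Ho HW Hg Hfg Hlg) as [C1 C2].
    destruct (canon G (KNodes NGrey)) eqn:Ec.
    + rewrite C1 by auto. simpl. split; [lia|auto].
    + destruct C2 as [A [x1 [Hin1 [Hx1 Bq]]]]; [discriminate|]. rewrite <- Ec in *. rewrite Bq.
      set (Ga := upd_node G (nid x1) fblue).
      set (L := [AInt (Z.of_nat j + 1)]).
      set (G' := upd_node Ga g (set_lab L)).
      assert (Hf1 : find_node G (nid x1) = Some x1) by (apply find_node_of; auto).
      assert (npb : NidPres fblue) by (intros yy; reflexivity).
      assert (HWa : WF Ga) by (apply WF_upd_node; auto).
      assert (HN' : NSH G' = NSH Ga) by apply NSH_lab.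
      assert (Hca : forall m, m <> NGrey -> m <> NBlue -> canon Ga (KNodes m) = canon G (KNodes m)).
      { intros m H1 H2. apply (canon_nodes_upd_mark G (nid x1) fblue x1); auto.
        simpl. rewrite Hx1. destruct m; simpl; congruence. }
      pose proof (ncm_upd G (nid x1) fblue x1 NGrey HW Hf1 npb) as Hn. rewrite Hx1 in Hn. simpl in Hn. fold Ga in Hn.
      assert (Hfa : exists y, find_node Ga g = Some y).
      { unfold Ga. rewrite find_node_upd, Hfg by auto. simpl. eauto. }
      destruct Hfa as [y Hfa].
      cbv beta iota. split.
      * split; [|split; [|split; [|split; [|split; [|split; [|split]]]]]].
        -- apply WF_upd_node; [intros yy; reflexivity|auto].
        -- rewrite (T1 G' Ga); auto. rewrite Hca by discriminate. auto.
        -- exact HB.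
        -- rewrite (T2 G' Ga); auto. unfold Ga. rewrite canon_roots_upd_pres; auto.
        -- exact Hred.
        -- exact HE.
        -- unfold G', Ga. rewrite !len_upd_node. auto.
        -- exists (S j). split.
           ++ unfold G'. rewrite (labg_same Ga g _ y); [|intros yy; reflexivity|exact Hfa].
              cbn [nlab set_lab]. unfold L. do 3 f_equal. lia.
           ++ unfold ncm in *. rewrite (T1 G' Ga); auto. lia.
      * unfold ncm in *. rewrite (T1 G' Ga); auto. lia.
  - intros r t' [G' [-> [A [Bq C]]]]. exists G'. split; [auto|]. split; [auto|]. split; [auto|lia].
Qed.

Lemma bf_runs o G : valid_oracle o -> input_ok G ->
  Runs o bellman_ford 0 G (fun r t' => t' <= 5000 * (num_nodes G * (num_edges G + 1))).
Proof.
  intros Ho HI.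
  assert (Hn1 : 1 <= num_nodes G).
  { destruct HI as [_ [_ [_ [_ [Hroot _]]]]]. unfold num_nodes.
    pose proof (filter_length_le nroot (gnodes G)). lia. }
  set (n := num_nodes G) in *. set (m := num_edges G).
  destruct (set_counter_spec o 0 G Ho HI) as [A [S0 [g [Bq [HW [Hg [HL [HB [Hr [Hred [HE HN]]]]]]]]]]].
  fold n m in HE, HN.
  unfold bellman_ford.
  apply runs_seq with (Q1 := fun r t1 => t1 <= 5 /\ r = Some S0).
  { apply runs_R. split; [lia|auto]. }
  2:{ intros t1 [_ E]. discriminate. }
  intros S0' t1 [Ht1 E]. injection E as E. subst S0'.
  assert (HC : CntI g (m + 1) (n + 1) (ncm S0 NGrey) S0).
  { refine (conj HW (conj Hg (conj HB (conj Hr (conj Hred (conj HE (conj HN _))))))). exists 0. split; [exact HL|simpl; lia]. }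
  apply runs_seq with (Q1 := fun r t' => exists G', r = Some G' /\ CntI g (m + 1) (n + 1) (ncm S0 NGrey) G' /\
     canon G' (KNodes NGrey) = [] /\ t' + 9 * ncm G' NGrey <= t1 + 9 * ncm S0 NGrey + 2).
  { apply count_loop; auto. }
  2:{ intros t2 [G' [EE _]]. discriminate. }
  intros Gc' t2 [Gc [EE [HCc [Hgc Ht2]]]]. injection EE as EE. subst Gc'.
  destruct HCc as [HWc [Hgrc [HBc [Hrc [Hredc [HEc [HNc [j [HLc Hj]]]]]]]]].
  assert (Hg0 : ncm Gc NGrey = 0) by (unfold ncm; rewrite Hgc; auto).
  assert (HS0 : ncm S0 NGrey <= n + 1) by (rewrite <- HN; apply ncm_le).
  assert (HM : MSt g j (m + 1) (n + 1) Gc).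
  { refine (conj HWc (conj Hgrc (conj HLc (conj HBc (conj Hrc (conj Hredc (conj _ (conj HEc HNc)))))))). intros w Hw. rewrite Hgc in Hw. destruct Hw. }
  assert (Hbl : ncm Gc NBlue + ncm Gc NGrey <= n + 1) by (rewrite Hg0, <- HNc; pose proof (ncm_le Gc NBlue); lia).
  apply runs_seq with (Q1 := fun r t' => exists G', r = Some G' /\ MSt g 0 (m + 1) (n + 1) G' /\
     t' <= t2 + 260 * (n + 1) + 109 * (m + 1) + 22 + j * (629 * (m + 1) + 10)).
  { apply main_loop; auto. }
  2:{ intros t3 [G' [EE' _]]. discriminate. }
  intros Gm' t3 [Gm [EE' [HMm Ht3]]]. injection EE' as EE'. subst Gm'.
  destruct HMm as [HWm [Hgm [HLm [HBm [Hrm [Hredm [HPgm [HEm HNm]]]]]]]].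
  eapply runs_mono; [apply (final_cost o g (m + 1) (n + 1) Ho Gm t3); exact (conj HWm (conj Hgm (conj Hrm (conj Hredm (conj HEm HNm)))))|].
  intros r t' Ht'. cbv beta in Ht'.
  assert (j <= n + 1) by lia.
  nia.
Qed.

Theorem mainTheorem8 :
  exists c : nat,
    forall G : graph, input_ok G ->
    forall o : oracle, valid_oracle o ->
    exists (fuel : nat) (r : option graph) (t' : nat),
      exec o fuel bellman_ford 0 G = Some (r, t') /\
      t' <= c * (num_nodes G * (num_edges G + 1)).
Proof.
  exists 5000. intros G HI o Ho. destruct (bf_runs o G Ho HI) as [f [r [t' [E H]]]].
  exists f, r, t'. auto.
Qed.
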